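(* Let $f:S^1\to S^1$, $f(z)=2z\pmod 1$, let $\tau:S^1\to\mathbb{R}$ be $C^\infty$, and couple $\nu=1/\hbar$. Fix $(x,\xi)\in S^1\times\mathbb{R}$. Then, as $\hbar=1/\nu\to 0$, the family $\phi_\hbar(z)=\hat F_\nu(\varphi_{x,\xi})(z)=\varphi_{x,\xi}(f(z))\,e^{i\tau(z)/\hbar}$ has micro-support contained in $\{G_1(x,\xi),G_2(x,\xi)\}\subset S^1\times\mathbb{R}$, where $G_1,G_2$ are the two inverse branches of $F(z,s)=\big(f(z),\tfrac12 s-\tfrac12\tau'(z)\big)$, namely $G_j(x,\xi)=(y_j,\,2\xi+\tau'(y_j))$ with $y_1=\tfrac{x}{2}$, $y_2=\tfrac{x}{2}+\tfrac12$. Equivalently: if $f(y)\neq x$, or $f(y)=x$ and $\eta\neq 2\xi+\tau'(y)$, then $(y,\eta)$ is not in the micro-support.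
   Context: $S^1=\mathbb{R}/\mathbb{Z}$ is identified with $[0,1)$; $\hbar>0$ is a small parameter. For $(x,\xi)\in\mathbb{R}^2$ the periodic Gaussian wavepacket is $\varphi_{x,\xi}(z)=\sum_{k\in\mathbb{Z}}e^{\frac{i\xi(z-k)}{\hbar}}e^{-\frac{(z-k-x)^2}{4\hbar}}$. Inner product: $\langle u,v\rangle=\int_0^1\overline{u(z)}\,v(z)\,dz$. A quantity $q(\hbar)$ is $O(\hbar^\infty)$ if for every $N>0$ there are $C_N,\delta>0$ with $|q(\hbar)|\le C_N\hbar^N$ for $0<\hbar\le\delta$. A family $\phi_\hbar\in L^2(S^1)$ is micro-locally small near $(x_0,\xi_0)\in S^1\times\mathbb{R}$ if $|\langle\varphi_{y,\eta},\phi_\hbar\rangle|$ is $O(\hbar^\infty)$ uniformly for $(y,\eta)$ in a neighbourhood of $(x_0,\xi_0)$; the micro-support of $\phi_\hbar$ is the set of points near which it is not micro-locally small. The operator $\hat F_\nu$ is $\hat F_\nu(\varphi)(z)=\varphi(f(z))\,e^{i\nu\tau(z)}$. *)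

(* Defs.v *)
From Stdlib Require Import Reals Lra ClassicalEpsilon.
Open Scope R_scope.

Definition Cx := (R * R)%type.
Definition cmod (c : Cx) : R := sqrt (fst c ^ 2 + snd c ^ 2).
Definition cmul (a b : Cx) : Cx :=
  (fst a * fst b - snd a * snd b, fst a * snd b + snd a * fst b).
Definition cconj (a : Cx) : Cx := (fst a, - snd a).
Definition cexpi (th : R) : Cx := (cos th, sin th).

(** Limit of a real sequence (chosen classically; it is THE limit when the
    sequence converges, since limits are unique). *)
Definition lim_seq (u : nat -> R) : R :=
  epsilon (inhabits 0) (fun l => Un_cv u l).

(** Riemann integral over [a,b] (THE integral when f is Riemann integrable). *)
Definition Rint (f : R -> R) (a b : R) : R :=
  epsilon (inhabits 0)
    (fun l => exists pr : Riemann_integrable f a b, RiemannInt pr = l).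

Definition symsum (g : R -> R) (n : nat) : R :=
  sum_f_R0 (fun j => g (INR j - INR n)) (2 * n).

Definition wp_term (hbar x xi z k : R) : Cx :=
  let a := exp (- (z - k - x) ^ 2 / (4 * hbar)) in
  (a * cos (xi * (z - k) / hbar), a * sin (xi * (z - k) / hbar)).

(** Periodic Gaussian wavepacket phi_{x,xi}(z) = sum_{k in Z} wp_term,
    as the limit of the symmetric partial sums (absolutely convergent). *)
Definition wavepacket (hbar x xi : R) (z : R) : Cx :=
  (lim_seq (symsum (fun k => fst (wp_term hbar x xi z k))),
   lim_seq (symsum (fun k => snd (wp_term hbar x xi z k)))).

Definition inner (u v : R -> Cx) : Cx :=
  (Rint (fun z => fst (cmul (cconj (u z)) (v z))) 0 1,
   Rint (fun z => snd (cmul (cconj (u z)) (v z))) 0 1).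

(** The doubling map f(z) = 2z mod 1 on S^1 = [0,1) *)
Definition doubling (z : R) : R := frac_part (2 * z).

Definition smooth (tau : R -> R) : Prop :=
  exists D : nat -> R -> R,
    D 0%nat = tau /\ forall n z, derivable_pt_lim (D n) z (D (S n) z).

Definition Fhat (tau : R -> R) (nu : R) (phi : R -> Cx) (z : R) : Cx :=
  cmul (phi (doubling z)) (cexpi (nu * tau z)).

Definition microlocally_small (phi : R -> R -> Cx) (x0 xi0 : R) : Prop :=
  exists r : R, 0 < r /\
    forall N : nat, exists C delta : R, 0 < delta /\
      forall hbar y eta, 0 < hbar <= delta ->
        Rabs (y - x0) < r -> Rabs (eta - xi0) < r ->
        cmod (inner (wavepacket hbar y eta) (phi hbar)) <= C * hbar ^ N.

Definition in_microsupport (phi : R -> R -> Cx) (x0 xi0 : R) : Prop :=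
  ~ microlocally_small phi x0 xi0.

(* Main.v *)
From Coquelicot Require Import Coquelicot.
Require Import Defs.
From Stdlib Require Import Reals Lra Lia Psatz ZArith ClassicalEpsilon.
Open Scope R_scope.

Lemma lim_seq_eq u l : Un_cv u l -> lim_seq u = l.
Proof.
  intros H. unfold lim_seq.
  pose proof (epsilon_spec (inhabits 0) (fun l => Un_cv u l) (ex_intro _ l H)) as H2.
  exact (UL_sequence u _ _ H2 H).
Qed.

Lemma Rint_eq f a b : ex_RInt f a b -> Rint f a b = RInt f a b.
Proof.
  intros H. pose proof (ex_RInt_Reals_0 f a b H) as pr.
  unfold Rint.
  pose proof (epsilon_spec (inhabits 0)
    (fun l => exists pr : Riemann_integrable f a b, RiemannInt pr = l)
    (ex_intro _ (RiemannInt pr) (ex_intro _ pr eq_refl))) as [pr' Hp].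
  rewrite <- Hp. symmetry. apply RInt_Reals.
Qed.

Lemma symsum_0 g : symsum g 0 = g 0.
Proof. unfold symsum. simpl. f_equal. ring. Qed.

Lemma symsum_S g n : symsum g (S n) = symsum g n + g (INR (S n)) + g (- INR (S n)).
Proof.
  unfold symsum. replace (2 * S n)%nat with (S (S (2*n))) by lia.
  rewrite decomp_sum by lia. rewrite Nat.pred_succ. rewrite tech5.
  rewrite (sum_eq (fun i => g (INR (S i) - INR (S n))) (fun j => g (INR j - INR n))).
  2:{ intros i _. f_equal. rewrite !S_INR. ring. }
  replace (INR (S (S (2 * n))) - INR (S n)) with (INR (S n)).
  2:{ rewrite !S_INR, mult_INR. simpl. ring. }
  replace (INR 0 - INR (S n)) with (- INR (S n)) by (simpl; ring).
  ring.
Qed.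

Lemma sym_cauchy (g : R -> R) (K : R) :
  (forall i:nat, (1 <= i)%nat -> Rabs (g (INR i)) + Rabs (g (- INR i)) <= K * (1/2)^i) ->
  forall n m, (n <= m)%nat -> Rabs (symsum g m - symsum g n) <= K * ((1/2)^n - (1/2)^m).
Proof.
  intros H n m Hnm. induction Hnm.
  - replace (symsum g n - symsum g n) with 0 by ring. rewrite Rabs_R0. lra.
  - rewrite symsum_S.
    specialize (H (S m) ltac:(lia)).
    replace (symsum g m + g (INR (S m)) + g (- INR (S m)) - symsum g n) with
      ((symsum g m - symsum g n) + g (INR (S m)) + g (- INR (S m))) by ring.
    eapply Rle_trans. apply Rabs_triang.
    eapply Rle_trans. apply Rplus_le_compat_r. apply Rabs_triang.
    replace (K * ((1 / 2) ^ n - (1 / 2) ^ S m)) with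
      (K * ((1 / 2) ^ n - (1 / 2) ^ m) + K * (1/2)^(S m)) by (cbn [pow]; field).
    lra.
Qed.

Lemma half_pow_pos n : 0 < (1/2)^n.
Proof. apply pow_lt. lra. Qed.

Lemma sym_conv (g : R -> R) (K : R) :
  (forall i:nat, (1 <= i)%nat -> Rabs (g (INR i)) + Rabs (g (- INR i)) <= K * (1/2)^i) ->
  Un_cv (symsum g) (lim_seq (symsum g)) /\
  (forall n, Rabs (lim_seq (symsum g) - symsum g n) <= K * (1/2)^n).
Proof.
  intros H.
  assert (HK : 0 <= K).
  { specialize (H 1%nat (le_n _)). pose proof (Rabs_pos (g (INR 1))).
    pose proof (Rabs_pos (g (- INR 1))). rewrite pow_1 in H. lra. }
  pose proof (sym_cauchy g K H) as HC.
  assert (Hc : Cauchy_crit (symsum g)).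
  { intros eps Heps.
    destruct (pow_lt_1_zero (1/2) ltac:(rewrite Rabs_pos_eq; lra) (eps/(K+1))
      ltac:(apply Rdiv_lt_0_compat; lra)) as [N HN].
    exists N. intros n m Hn Hm. unfold R_dist.
    assert (Hgen : forall a b, (N <= a)%nat -> (a <= b)%nat -> Rabs (symsum g b - symsum g a) < eps).
    { intros a b Ha Hab. eapply Rle_lt_trans. apply HC; auto.
      specialize (HN a Ha). rewrite Rabs_pos_eq in HN by (left; apply half_pow_pos).
      pose proof (half_pow_pos b).
      apply Rmult_lt_compat_r with (r := K+1) in HN; [|lra].
      unfold Rdiv in HN. rewrite Rmult_assoc, Rinv_l in HN by lra.
      nra. }
    destruct (Compare_dec.le_lt_dec n m).
    + rewrite Rabs_minus_sym. apply Hgen; lia.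
    + apply Hgen; lia. }
  destruct (R_complete _ Hc) as [l Hl].
  rewrite (lim_seq_eq _ _ Hl). split; auto.
  intros n. apply Rle_plus_epsilon. intros eps Heps.
  destruct (Hl eps Heps) as [N HN].
  specialize (HN (max n N) ltac:(lia)). unfold R_dist in HN.
  specialize (HC n (max n N) ltac:(lia)).
  pose proof (half_pow_pos (max n N)).
  replace (l - symsum g n) with ((symsum g (max n N) - symsum g n) - (symsum g (max n N) - l)) by ring.
  eapply Rle_trans. apply Rabs_triang. rewrite Rabs_Ropp. nra.
Qed.

Lemma sym_conv0 (g : R -> R) (K : R) :
  (forall i:nat, (1 <= i)%nat -> Rabs (g (INR i)) + Rabs (g (- INR i)) <= K * (1/2)^i) ->
  Rabs (lim_seq (symsum g) - g 0) <= K.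
Proof.
  intros H. destruct (sym_conv g K H) as [_ H2]. specialize (H2 0%nat).
  rewrite symsum_0 in H2. simpl in H2. lra.
Qed.

Definition n1 (c : R * R) : R := Rabs (fst c) + Rabs (snd c).

Lemma n1_pos c : 0 <= n1 c.
Proof. unfold n1. pose proof (Rabs_pos (fst c)); pose proof (Rabs_pos (snd c)); lra. Qed.

Lemma cmod_le_n1 c : cmod c <= n1 c.
Proof.
  unfold cmod, n1. destruct c as [a b]; simpl.
  rewrite <- (sqrt_pow2 (Rabs a + Rabs b)).
  2:{ pose proof (Rabs_pos a); pose proof (Rabs_pos b); lra. }
  apply sqrt_le_1_alt.
  pose proof (Rabs_pos a); pose proof (Rabs_pos b).
  pose proof (Rsqr_abs a); pose proof (Rsqr_abs b); unfold Rsqr in *. nra.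
Qed.

Lemma n1_cmul a b : n1 (cmul a b) <= n1 a * n1 b.
Proof.
  unfold n1, cmul. destruct a as [a1 a2], b as [b1 b2]; simpl.
  pose proof (Rabs_triang (a1*b1) (- (a2*b2))).
  pose proof (Rabs_triang (a1*b2) (a2*b1)).
  rewrite Rabs_Ropp in H. rewrite !Rabs_mult in H, H0.
  unfold Rminus. nra.
Qed.

Lemma n1_cconj a : n1 (cconj a) = n1 a.
Proof. unfold n1, cconj; simpl. rewrite Rabs_Ropp. ring. Qed.

Lemma n1_cexpi t : n1 (cexpi t) <= 2.
Proof.
  unfold n1, cexpi; simpl.
  pose proof (COS_bound t). pose proof (SIN_bound t).
  unfold Rabs; repeat destruct Rcase_abs; lra.
Qed.

Lemma exp_half c h : 0 < h -> h <= c -> exp (- c / h) <= 1/2.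
Proof.
  intros Hh Hc.
  assert (H1 : - c / h <= -1).
  { unfold Rdiv. apply Rmult_le_reg_r with h; auto.
    rewrite Rmult_assoc, Rinv_l by lra. lra. }
  pose proof (exp_ineq1 1 ltac:(lra)).
  assert (E : exp (-1) = / exp 1) by (replace (-1) with (-(1)) by ring; rewrite exp_Ropp; auto).
  assert (exp (-c/h) <= exp (-1)).
  { destruct H1 as [H1|H1]. left. apply exp_increasing; lra. rewrite H1; lra. }
  rewrite E in H0. apply Rle_trans with (/ exp 1); auto.
  apply Rle_trans with (/2). apply Rinv_le_contravar; lra. lra.
Qed.

Lemma exp_mul_nat a (j : nat) : exp (a * INR j) = (exp a)^j.
Proof.
  induction j. simpl. rewrite Rmult_0_r, exp_0. auto.
  rewrite S_INR. simpl. rewrite Rmult_plus_distr_l, Rmult_1_r, exp_plus, IHj. ring.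
Qed.

Lemma exp_small_pow c h (N : nat) : 0 < c -> 0 < h ->
  exp (- c / h) <= (INR N * h / c) ^ N.
Proof.
  intros Hc Hh. destruct N.
  - simpl. rewrite <- exp_0. left. apply exp_increasing.
    replace (-c/h) with (-(c/h)) by (field; lra).
    pose proof (Rdiv_lt_0_compat c h Hc Hh). lra.
  - set (n := INR (S N)). assert (Hn : 0 < n) by (apply lt_0_INR; lia).
    assert (E : exp (c/h) = (exp (c / (h * n)))^(S N)).
    { rewrite <- exp_mul_nat. f_equal. fold n. field. lra. }
    assert (Hg : (c / (h*n)) ^ (S N) <= exp (c/h)).
    { rewrite E. apply pow_incr. split.
      - apply Rlt_le, Rdiv_lt_0_compat; auto. apply Rmult_lt_0_compat; auto.
      - pose proof (exp_ineq1 (c/(h*n))). destruct (Req_dec (c/(h*n)) 0) as [e|ne].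
        + rewrite e, exp_0. lra.
        + specialize (H ne). lra. }
    assert (exp (-c/h) = / exp (c/h)).
    { rewrite <- exp_Ropp. f_equal. field. lra. }
    rewrite H.
    replace ((n * h / c) ^ S N) with (/ ((c/(h*n))^(S N))).
    2:{ rewrite <- pow_inv. f_equal. field. split; lra. }
    apply Rinv_le_contravar; auto. apply pow_lt. apply Rdiv_lt_0_compat; auto.
    apply Rmult_lt_0_compat; auto.
Qed.

Definition env (h x u k : R) := exp (- (u - k - x) ^ 2 / (4 * h)).

Lemma wp_fst h x xi u k : fst (wp_term h x xi u k) = env h x u k * cos (xi * (u - k) / h).
Proof. reflexivity. Qed.
Lemma wp_snd h x xi u k : snd (wp_term h x xi u k) = env h x u k * sin (xi * (u - k) / h).
Proof. reflexivity. Qed.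

Lemma env_pos h x u k : 0 < env h x u k.
Proof. apply exp_pos. Qed.

Lemma wp_fst_bound h x xi u k : Rabs (fst (wp_term h x xi u k)) <= env h x u k.
Proof.
  rewrite wp_fst, Rabs_mult, (Rabs_pos_eq (env _ _ _ _)) by (left; apply env_pos).
  pose proof (env_pos h x u k). pose proof (COS_bound (xi * (u - k) / h)).
  assert (Rabs (cos (xi * (u - k) / h)) <= 1) by (unfold Rabs; destruct Rcase_abs; lra).
  nra.
Qed.
Lemma wp_snd_bound h x xi u k : Rabs (snd (wp_term h x xi u k)) <= env h x u k.
Proof.
  rewrite wp_snd, Rabs_mult, (Rabs_pos_eq (env _ _ _ _)) by (left; apply env_pos).
  pose proof (env_pos h x u k). pose proof (SIN_bound (xi * (u - k) / h)).
  assert (Rabs (sin (xi * (u - k) / h)) <= 1) by (unfold Rabs; destruct Rcase_abs; lra).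
  nra.
Qed.

Lemma env_le1 h x u k : 0 < h -> env h x u k <= 1.
Proof.
  intros Hh. unfold env. rewrite <- exp_0.
  destruct (Req_dec ((u - k - x)^2) 0) as [e|ne].
  - rewrite e. right. f_equal. field. lra.
  - left. apply exp_increasing.
    assert (0 < (u-k-x)^2) by (pose proof (pow2_ge_0 (u-k-x)); lra).
    assert (0 < (u - k - x) ^ 2 / (4 * h)) by (apply Rdiv_lt_0_compat; lra).
    replace (- (u - k - x) ^ 2 / (4 * h)) with (- ((u - k - x) ^ 2 / (4 * h))) by (field; lra).
    lra.
Qed.

Lemma exp_div_mono s t h : 0 < h -> t <= s -> exp (- s / (4 * h)) <= exp (- t / (4*h)).
Proof.
  intros Hh Hts. destruct Hts as [Hts|Hts].
  - left. apply exp_increasing. unfold Rdiv. apply Rmult_lt_compat_r.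
    apply Rinv_0_lt_compat; lra. lra.
  - rewrite Hts. lra.
Qed.

Lemma half_pow_mul V i : (i <= V)%nat -> 1 <= 2 ^ V * (1/2)^i.
Proof.
  intros H. replace V with (i + (V - i))%nat by lia. rewrite pow_add.
  replace (2 ^ i * 2 ^ (V - i) * (1 / 2) ^ i) with ((2 * (1/2))^i * 2^(V-i)).
  2:{ rewrite Rpow_mult_distr. ring. }
  replace (2 * (1/2)) with 1 by field. rewrite pow1.
  assert (1 <= 2 ^ (V - i)) by (apply pow_R1_Rle; lra). lra.
Qed.

Lemma env_geom h x u (V i : nat) :
  0 < h -> exp (- 1 / (4*h)) <= 1/2 -> Rabs (u - x) <= INR V ->
  env h x u (INR i) <= 2 ^ V * (1/2)^i /\ env h x u (- INR i) <= 2 ^ V * (1/2)^i.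
Proof.
  intros Hh Hq Hv.
  destruct (Compare_dec.le_lt_dec i V) as [Hi|Hi].
  - pose proof (half_pow_mul V i Hi). pose proof (env_le1 h x u (INR i) Hh).
    pose proof (env_le1 h x u (- INR i) Hh). lra.
  - set (d := INR (i - V)).
    assert (Hd : d = INR i - INR V) by (unfold d; rewrite minus_INR; lia || auto; lia).
    assert (Hd1 : 1 <= d) by (unfold d; replace 1 with (INR 1) by reflexivity; apply le_INR; lia).
    assert (Hpow : exp (- d / (4*h)) = exp (-1/(4*h)) ^ (i - V)).
    { rewrite <- exp_mul_nat. f_equal. fold d. field. lra. }
    assert (Hpq : exp (-1/(4*h)) ^ (i - V) <= (1/2)^(i-V)).
    { apply pow_incr. split; auto. left; apply exp_pos. }
    assert (Hh2 : (1/2)^(i - V) = 2 ^ V * (1/2)^i).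
    { replace i with (V + (i - V))%nat at 2 by lia. rewrite pow_add.
      replace (2 ^ V * ((1 / 2) ^ V * (1 / 2) ^ (i - V))) with ((2 * (1/2))^V * (1/2)^(i-V))
        by (rewrite Rpow_mult_distr; ring).
      replace (2 * (1/2)) with 1 by field. rewrite pow1. ring. }
    assert (Hab : forall w, Rabs w <= INR V -> d <= (w - INR i)^2).
    { intros w Hw. assert (d <= INR i - w) by (apply Rabs_le_between in Hw; lra).
      assert (0 <= d) by lra. nra. }
    split; unfold env.
    + eapply Rle_trans. apply exp_div_mono with (t := d); auto.
      replace (u - INR i - x) with ((u - x) - INR i) by ring. apply Hab; auto.
      lra.
    + eapply Rle_trans. apply exp_div_mono with (t := d); auto.
      replace ((u - - INR i - x)^2) with ((-(u - x) - INR i)^2) by ring. apply Hab.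
      rewrite Rabs_Ropp; auto. lra.
Qed.

Definition hsmall (h : R) := 0 < h /\ exp (- 1 / (4*h)) <= 1/2.

Lemma W_conv_fst h x xi u (V : nat) : hsmall h -> Rabs (u - x) <= INR V ->
  Un_cv (symsum (fun k => fst (wp_term h x xi u k))) (fst (wavepacket h x xi u)) /\
  forall n, Rabs (fst (wavepacket h x xi u) - symsum (fun k => fst (wp_term h x xi u k)) n)
            <= 2 * 2 ^ V * (1/2)^n.
Proof.
  intros [Hh Hq] Hv. apply sym_conv.
  intros i _. destruct (env_geom h x u V i Hh Hq Hv).
  pose proof (wp_fst_bound h x xi u (INR i)). pose proof (wp_fst_bound h x xi u (- INR i)).
  lra.
Qed.

Lemma W_conv_snd h x xi u (V : nat) : hsmall h -> Rabs (u - x) <= INR V ->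
  Un_cv (symsum (fun k => snd (wp_term h x xi u k))) (snd (wavepacket h x xi u)) /\
  forall n, Rabs (snd (wavepacket h x xi u) - symsum (fun k => snd (wp_term h x xi u k)) n)
            <= 2 * 2 ^ V * (1/2)^n.
Proof.
  intros [Hh Hq] Hv. apply sym_conv.
  intros i _. destruct (env_geom h x u V i Hh Hq Hv).
  pose proof (wp_snd_bound h x xi u (INR i)). pose proof (wp_snd_bound h x xi u (- INR i)).
  lra.
Qed.

Lemma exists_V (t : R) : exists V : nat, Rabs t <= INR V.
Proof.
  destruct (archimed (Rabs t)) as [H1 _].
  exists (Z.to_nat (up (Rabs t))).
  rewrite INR_IZR_INZ, Z2Nat.id. lra.
  apply le_IZR. pose proof (Rabs_pos t). lra.
Qed.

Lemma pow_zero_lemma a C : (forall n, Rabs a <= C * (1/2)^n) -> a = 0.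
Proof.
  intros H. destruct (Req_dec a 0) as [e|ne]; auto. exfalso.
  assert (Ha : 0 < Rabs a) by (apply Rabs_pos_lt; auto).
  assert (HC : 0 < C).
  { specialize (H 0%nat). simpl in H. lra. }
  destruct (pow_lt_1_zero (1/2) ltac:(rewrite Rabs_pos_eq by lra; lra) (Rabs a / C)
     ltac:(apply Rdiv_lt_0_compat; lra)) as [N HN].
  specialize (HN N (le_n _)). specialize (H N).
  rewrite Rabs_pos_eq in HN by (left; apply half_pow_pos).
  apply Rmult_lt_compat_l with (r := C) in HN; auto.
  replace (C * (Rabs a / C)) with (Rabs a) in HN by (field; lra). lra.
Qed.

Lemma Rabs4 p q r s : Rabs (p + q + r + s) <= Rabs p + Rabs q + Rabs r + Rabs s.
Proof.
  eapply Rle_trans. apply Rabs_triang. eapply Rle_trans. apply Rplus_le_compat_r. apply Rabs_triang.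
  eapply Rle_trans. apply Rplus_le_compat_r. apply Rplus_le_compat_r. apply Rabs_triang. lra.
Qed.

Lemma symsum_shift G n :
  symsum (fun k => G (k - 1)) n = symsum G n - G (INR n) + G (- INR n - 1).
Proof.
  induction n.
  - rewrite !symsum_0. simpl. replace (0 - 1) with (- 0 - 1) by ring. ring.
  - rewrite !symsum_S, IHn. rewrite S_INR.
    replace (INR n + 1 - 1) with (INR n) by ring.
    replace (- (INR n + 1) - 1) with (- (INR n + 1) - 1) by ring.
    replace (- (INR n + 1)) with (- INR n - 1) by ring. ring.
Qed.

Lemma wp_shift h x xi u k : wp_term h x xi (u + 1) k = wp_term h x xi u (k - 1).
Proof.
  unfold wp_term. replace (u + 1 - k) with (u - (k - 1)) by ring. reflexivity.
Qed.

Lemma W_period1 h x xi u : hsmall h -> wavepacket h x xi (u + 1) = wavepacket h x xi u.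
Proof.
  intros Hs. destruct (exists_V (u - x)) as [V0 HV0].
  set (V := S V0).
  assert (HV : Rabs (u - x) <= INR V) by (unfold V; rewrite S_INR; lra).
  assert (HV1 : Rabs (u + 1 - x) <= INR V).
  { unfold V. rewrite S_INR. replace (u + 1 - x) with ((u - x) + 1) by ring.
    eapply Rle_trans. apply Rabs_triang. rewrite Rabs_R1. lra. }
  destruct Hs as [Hh Hq].
  assert (Hgen : forall (p : R * R -> R),
    (forall k, Rabs (p (wp_term h x xi u k)) <= env h x u k) ->
    (forall n, Rabs (lim_seq (symsum (fun k => p (wp_term h x xi (u+1) k))) -
       symsum (fun k => p (wp_term h x xi (u+1) k)) n) <= 2 * 2 ^ V * (1/2)^n) ->
    (forall n, Rabs (lim_seq (symsum (fun k => p (wp_term h x xi u k))) -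
       symsum (fun k => p (wp_term h x xi u k)) n) <= 2 * 2 ^ V * (1/2)^n) ->
    lim_seq (symsum (fun k => p (wp_term h x xi (u+1) k))) =
    lim_seq (symsum (fun k => p (wp_term h x xi u k)))).
  { intros p Hb H1 H0.
    apply Rminus_diag_uniq. apply (pow_zero_lemma _ (6 * 2 ^ V)). intros n.
    specialize (H1 n). specialize (H0 n).
    assert (E : symsum (fun k => p (wp_term h x xi (u+1) k)) n =
      symsum (fun k => p (wp_term h x xi u k)) n - p (wp_term h x xi u (INR n))
        + p (wp_term h x xi u (- INR n - 1))).
    { rewrite <- symsum_shift. unfold symsum. apply sum_eq. intros. rewrite wp_shift. auto. }
    rewrite E in H1.
    destruct (env_geom h x u V n Hh Hq HV) as [E1 _].
    destruct (env_geom h x u V (S n) Hh Hq HV) as [_ E2].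
    rewrite S_INR in E2. replace (- (INR n + 1)) with (- INR n - 1) in E2 by ring.
    pose proof (Hb (INR n)). pose proof (Hb (- INR n - 1)).
    assert ((1/2)^(S n) <= (1/2)^n) by (simpl; pose proof (half_pow_pos n); lra).
    pose proof (half_pow_pos n). pose proof (pow_lt 2 V ltac:(lra)).
    set (A := lim_seq (symsum (fun k => p (wp_term h x xi (u+1) k)))) in *.
    set (B := lim_seq (symsum (fun k => p (wp_term h x xi u k)))) in *.
    set (S0 := symsum (fun k => p (wp_term h x xi u k)) n) in *.
    set (a := p (wp_term h x xi u (INR n))) in *.
    set (b := p (wp_term h x xi u (- INR n - 1))) in *.
    replace (A - B) with ((A - (S0 - a + b)) + (S0 - B) + (- a) + b) by ring.
    pose proof (Rabs4 (A - (S0 - a + b)) (S0 - B) (-a) b).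
    rewrite Rabs_minus_sym in H0. rewrite Rabs_Ropp in *.
    nra. }
  unfold wavepacket. f_equal.
  - apply Hgen. intros; apply wp_fst_bound.
    apply (W_conv_fst h x xi (u+1) V (conj Hh Hq) HV1).
    apply (W_conv_fst h x xi u V (conj Hh Hq) HV).
  - apply Hgen. intros; apply wp_snd_bound.
    apply (W_conv_snd h x xi (u+1) V (conj Hh Hq) HV1).
    apply (W_conv_snd h x xi u V (conj Hh Hq) HV).
Qed.

Lemma W_period_nat h x xi u (n : nat) : hsmall h -> wavepacket h x xi (u + INR n) = wavepacket h x xi u.
Proof.
  intros Hs. induction n. simpl. rewrite Rplus_0_r. auto.
  rewrite S_INR. replace (u + (INR n + 1)) with ((u + INR n) + 1) by ring.
  rewrite W_period1; auto.
Qed.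

Lemma W_period_Z h x xi u (m : Z) : hsmall h -> wavepacket h x xi (u + IZR m) = wavepacket h x xi u.
Proof.
  intros Hs. destruct (Z_le_gt_dec 0 m) as [Hm|Hm].
  - replace m with (Z.of_nat (Z.to_nat m)) by (apply Z2Nat.id; lia).
    rewrite <- INR_IZR_INZ. apply W_period_nat; auto.
  - replace m with (- Z.of_nat (Z.to_nat (- m)))%Z by (rewrite Z2Nat.id; lia).
    rewrite opp_IZR, <- INR_IZR_INZ.
    rewrite <- (W_period_nat h x xi (u + - INR (Z.to_nat (- m))) (Z.to_nat (- m))); auto.
    f_equal. ring.
Qed.

Lemma W_doubling h x xi z : hsmall h -> wavepacket h x xi (doubling z) = wavepacket h x xi (2 * z).
Proof.
  intros Hs. unfold doubling, frac_part.
  unfold Rminus. rewrite <- opp_IZR. apply W_period_Z; auto.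
Qed.

Lemma cp_plus f g x : continuity_pt f x -> continuity_pt g x -> continuity_pt (fun z => f z + g z) x.
Proof. apply continuity_pt_plus. Qed.
Lemma cp_minus f g x : continuity_pt f x -> continuity_pt g x -> continuity_pt (fun z => f z - g z) x.
Proof. apply continuity_pt_minus. Qed.
Lemma cp_mult f g x : continuity_pt f x -> continuity_pt g x -> continuity_pt (fun z => f z * g z) x.
Proof. apply continuity_pt_mult. Qed.
Lemma cp_opp f x : continuity_pt f x -> continuity_pt (fun z => - f z) x.
Proof. apply continuity_pt_opp. Qed.
Lemma cp_const c x : continuity_pt (fun _ => c) x.
Proof. apply continuity_pt_const. intros a b; auto. Qed.
Lemma cp_id x : continuity_pt (fun z => z) x.
Proof. apply derivable_continuous_pt. apply derivable_pt_id. Qed.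
Lemma cp_comp f g x : continuity_pt f x -> continuity_pt g (f x) -> continuity_pt (fun z => g (f z)) x.
Proof. intros. apply (continuity_pt_comp f g x); auto. Qed.
Lemma cp_cos f x : continuity_pt f x -> continuity_pt (fun z => cos (f z)) x.
Proof. intros. apply cp_comp; auto. apply continuity_cos. Qed.
Lemma cp_sin f x : continuity_pt f x -> continuity_pt (fun z => sin (f z)) x.
Proof. intros. apply cp_comp; auto. apply continuity_sin. Qed.
Lemma cp_exp f x : continuity_pt f x -> continuity_pt (fun z => exp (f z)) x.
Proof. intros. apply cp_comp; auto. apply derivable_continuous_pt. apply derivable_pt_exp. Qed.
Lemma cp_div f c x : continuity_pt f x -> continuity_pt (fun z => f z / c) x.
Proof. intros. unfold Rdiv. apply cp_mult; auto. apply cp_const. Qed.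

Ltac cont := repeat first
  [ apply cp_plus | apply cp_minus | apply cp_mult | apply cp_opp | apply cp_cos
  | apply cp_sin | apply cp_exp | apply cp_div | apply cp_id | apply cp_const
  | assumption ].

Lemma sum_cont (F : nat -> R -> R) N y :
  (forall j, continuity_pt (F j) y) -> continuity_pt (fun u => sum_f_R0 (fun j => F j u) N) y.
Proof.
  intros H. induction N; simpl. apply H. apply cp_plus; auto.
Qed.

Lemma W_cont_gen h x xi (p : R * R -> R) u0 :
  hsmall h ->
  (forall u n, Rabs (p (wavepacket h x xi u) - symsum (fun k => p (wp_term h x xi u k)) n)
     <= 2 * 2 ^ (S (Z.to_nat (up (Rabs (u0 - x))))) * (1/2)^n \/ Rabs (u - u0) >= 1) ->
  (forall k y, continuity_pt (fun u => p (wp_term h x xi u k)) y) ->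
  continuity_pt (fun u => p (wavepacket h x xi u)) u0.
Proof.
  intros Hs Hb Hc.
  set (V := S (Z.to_nat (up (Rabs (u0 - x))))) in *.
  apply (CVU_continuity (fun n u => symsum (fun k => p (wp_term h x xi u k)) n) _ u0
    (mkposreal 1 Rlt_0_1)).
  - intros eps Heps.
    assert (HV : 0 < 2 * 2 ^ V) by (pose proof (pow_lt 2 V ltac:(lra)); lra).
    destruct (pow_lt_1_zero (1/2) ltac:(rewrite Rabs_pos_eq by lra; lra) (eps / (2 * 2^V))
      ltac:(apply Rdiv_lt_0_compat; lra)) as [N HN].
    exists N. intros n y Hn Hy. unfold Boule in Hy; simpl in Hy.
    destruct (Hb y n) as [H|H]; [|lra].
    eapply Rle_lt_trans. apply H. specialize (HN n Hn).
    rewrite Rabs_pos_eq in HN by (left; apply half_pow_pos).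
    apply Rmult_lt_compat_l with (r := 2 * 2 ^ V) in HN; auto.
    replace (2 * 2 ^ V * (eps / (2 * 2 ^ V))) with eps in HN by (field; lra). lra.
  - intros n y _. unfold symsum. apply sum_cont. intros j. apply Hc.
  - unfold Boule; simpl. rewrite Rminus_eq_0, Rabs_R0. lra.
Qed.

Lemma V_bound u0 x u : Rabs (u - u0) < 1 -> Rabs (u - x) <= INR (S (Z.to_nat (up (Rabs (u0 - x))))).
Proof.
  intros H. rewrite S_INR, INR_IZR_INZ, Z2Nat.id.
  - destruct (archimed (Rabs (u0 - x))).
    replace (u - x) with ((u - u0) + (u0 - x)) by ring.
    eapply Rle_trans. apply Rabs_triang. lra.
  - apply le_IZR. destruct (archimed (Rabs (u0 - x))). pose proof (Rabs_pos (u0 - x)). lra.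
Qed.

Lemma W_cont_fst h x xi u0 : hsmall h -> continuity_pt (fun u => fst (wavepacket h x xi u)) u0.
Proof.
  intros Hs. apply W_cont_gen; auto.
  - intros u n. destruct (Rlt_le_dec (Rabs (u - u0)) 1) as [H|H]; [left|right; lra].
    apply (W_conv_fst h x xi u _ Hs (V_bound u0 x u H)).
  - intros k y. unfold wp_term; simpl. cont.
Qed.

Lemma W_cont_snd h x xi u0 : hsmall h -> continuity_pt (fun u => snd (wavepacket h x xi u)) u0.
Proof.
  intros Hs. apply W_cont_gen; auto.
  - intros u n. destruct (Rlt_le_dec (Rabs (u - u0)) 1) as [H|H]; [left|right; lra].
    apply (W_conv_snd h x xi u _ Hs (V_bound u0 x u H)).
  - intros k y. unfold wp_term; simpl. cont.
Qed.

Lemma dl_val f x l l' : derivable_pt_lim f x l -> l = l' -> derivable_pt_lim f x l'.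
Proof. intros H e; subst; auto. Qed.
Lemma dl_ext f g x l : (forall z, f z = g z) -> derivable_pt_lim f x l -> derivable_pt_lim g x l.
Proof.
  intros E H eps Heps. destruct (H eps Heps) as [d Hd]. exists d. intros hh H1 H2.
  rewrite <- !E. apply Hd; auto.
Qed.
Lemma dl_const c x : derivable_pt_lim (fun _ => c) x 0.
Proof. apply (derivable_pt_lim_const c x). Qed.
Lemma dl_id x : derivable_pt_lim (fun z => z) x 1.
Proof. apply (derivable_pt_lim_id x). Qed.
Lemma dl_plus f g x a b : derivable_pt_lim f x a -> derivable_pt_lim g x b ->
  derivable_pt_lim (fun z => f z + g z) x (a + b).
Proof. apply derivable_pt_lim_plus. Qed.
Lemma dl_minus f g x a b : derivable_pt_lim f x a -> derivable_pt_lim g x b ->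
  derivable_pt_lim (fun z => f z - g z) x (a - b).
Proof. apply derivable_pt_lim_minus. Qed.
Lemma dl_mult f g x a b : derivable_pt_lim f x a -> derivable_pt_lim g x b ->
  derivable_pt_lim (fun z => f z * g z) x (a * g x + f x * b).
Proof. apply derivable_pt_lim_mult. Qed.
Lemma dl_opp f x a : derivable_pt_lim f x a -> derivable_pt_lim (fun z => - f z) x (- a).
Proof. apply derivable_pt_lim_opp. Qed.
Lemma dl_exp f x a : derivable_pt_lim f x a -> derivable_pt_lim (fun z => exp (f z)) x (exp (f x) * a).
Proof. intros H. apply (derivable_pt_lim_comp f exp x a (exp (f x)) H). apply derivable_pt_lim_exp. Qed.
Lemma dl_cos f x a : derivable_pt_lim f x a -> derivable_pt_lim (fun z => cos (f z)) x (- sin (f x) * a).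
Proof. intros H. apply (derivable_pt_lim_comp f cos x a _ H). apply derivable_pt_lim_cos. Qed.
Lemma dl_sin f x a : derivable_pt_lim f x a -> derivable_pt_lim (fun z => sin (f z)) x (cos (f x) * a).
Proof. intros H. apply (derivable_pt_lim_comp f sin x a _ H). apply derivable_pt_lim_sin. Qed.
Lemma dl_div f g x a b : derivable_pt_lim f x a -> derivable_pt_lim g x b -> g x <> 0 ->
  derivable_pt_lim (fun z => f z / g z) x ((a * g x - b * f x) / (g x)²).
Proof. apply derivable_pt_lim_div. Qed.
Lemma dl_divc f x a c : derivable_pt_lim f x a -> derivable_pt_lim (fun z => f z / c) x (a / c).
Proof.
  intros H. unfold Rdiv. eapply dl_val. apply dl_mult; [exact H| apply dl_const]. cbv beta. ring.
Qed.
Lemma dl_pow2 f x a : derivable_pt_lim f x a -> derivable_pt_lim (fun z => (f z)^2) x (2 * f x * a).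
Proof.
  intros H. apply dl_ext with (f := fun z => f z * f z). intros; ring.
  eapply dl_val. apply dl_mult; exact H. ring.
Qed.

Ltac dauto := repeat first
  [ apply dl_plus | apply dl_minus | apply dl_mult | apply dl_opp | apply dl_exp
  | apply dl_cos | apply dl_sin | apply dl_divc | apply dl_pow2 | apply dl_id | apply dl_const
  | eassumption ].

Definition cadd (a b : R * R) : R * R := (fst a + fst b, snd a + snd b).
Definition cinv (a : R * R) : R * R :=
  (fst a / (fst a ^ 2 + snd a ^ 2), - snd a / (fst a ^ 2 + snd a ^ 2)).

Lemma cmul_assoc a b c : cmul (cmul a b) c = cmul a (cmul b c).
Proof. destruct a, b, c; unfold cmul; simpl; f_equal; ring. Qed.
Lemma cmul_comm a b : cmul a b = cmul b a.
Proof. destruct a, b; unfold cmul; simpl; f_equal; ring. Qed.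
Lemma cmul_1l a : cmul (1,0) a = a.
Proof. destruct a; unfold cmul; simpl; f_equal; ring. Qed.
Lemma cinv_mul a : fst a ^ 2 + snd a ^ 2 <> 0 -> cmul (cinv a) a = (1, 0).
Proof. destruct a as [p q]; unfold cmul, cinv; simpl; intros H; f_equal; field; auto; lra. Qed.
Lemma n1_cadd a b : n1 (cadd a b) <= n1 a + n1 b.
Proof.
  unfold n1, cadd; simpl. pose proof (Rabs_triang (fst a) (fst b)).
  pose proof (Rabs_triang (snd a) (snd b)). lra.
Qed.
Lemma n1_cinv a c0 : 0 < c0 -> (c0 <= Rabs (fst a) \/ c0 <= Rabs (snd a)) -> n1 (cinv a) <= 2 / c0.
Proof.
  destruct a as [p q]; unfold n1, cinv; cbn [fst snd]. intros Hc H.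
  assert (Ep : p^2 = Rabs p ^ 2) by (rewrite pow2_abs; auto).
  assert (Eq : q^2 = Rabs q ^ 2) by (rewrite pow2_abs; auto).
  pose proof (Rabs_pos p); pose proof (Rabs_pos q).
  set (n := p^2 + q^2).
  assert (Hm : 0 < n).
  { unfold n. rewrite Ep, Eq. destruct H; nra. }
  assert (Hi : Rabs (/ n) = / n) by (apply Rabs_pos_eq; left; apply Rinv_0_lt_compat; auto).
  assert (E1 : Rabs (p / n) = Rabs p / n).
  { unfold Rdiv. rewrite Rabs_mult, Hi. auto. }
  assert (E2 : Rabs (- q / n) = Rabs q / n).
  { unfold Rdiv. rewrite Rabs_mult, Rabs_Ropp, Hi. auto. }
  rewrite E1, E2.
  replace (Rabs p / n + Rabs q / n) with ((Rabs p + Rabs q) / n) by (field; lra).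
  apply Rmult_le_reg_r with (n * c0). nra.
  replace ((Rabs p + Rabs q) / n * (n * c0)) with ((Rabs p + Rabs q) * c0) by (field; lra).
  replace (2 / c0 * (n * c0)) with (2 * n) by (field; lra).
  unfold n. rewrite Ep, Eq. pose proof (pow2_ge_0 (Rabs p - Rabs q)). destruct H; nra.
Qed.

Definition cdiff (f : R -> R * R) (l : R * R) (z : R) : Prop :=
  derivable_pt_lim (fun t => fst (f t)) z (fst l) /\ derivable_pt_lim (fun t => snd (f t)) z (snd l).

Lemma cdiff_cont f l z : cdiff f l z ->
  continuity_pt (fun t => fst (f t)) z /\ continuity_pt (fun t => snd (f t)) z.
Proof.
  intros [H1 H2]. split; apply derivable_continuous_pt; eexists; eauto.
Qed.

Lemma cdiff_add f g a b z : cdiff f a z -> cdiff g b z -> cdiff (fun t => cadd (f t) (g t)) (cadd a b) z.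
Proof. intros [H1 H2] [H3 H4]. split; simpl; apply dl_plus; auto. Qed.

Lemma cdiff_mul f g a b z : cdiff f a z -> cdiff g b z ->
  cdiff (fun t => cmul (f t) (g t)) (cadd (cmul a (g z)) (cmul (f z) b)) z.
Proof.
  intros [H1 H2] [H3 H4]. unfold cmul, cadd. split; simpl.
  - eapply dl_val. apply dl_minus; apply dl_mult; eauto. cbv beta. ring.
  - eapply dl_val. apply dl_plus; apply dl_mult; eauto. cbv beta. ring.
Qed.

Lemma cdiff_const c z : cdiff (fun _ => c) (0, 0) z.
Proof. split; simpl; apply dl_const. Qed.

Lemma cdiff_inv p q p' q' z : derivable_pt_lim p z p' -> derivable_pt_lim q z q' ->
  p z ^ 2 + q z ^ 2 <> 0 ->
  cdiff (fun t => cinv (p t, q t))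
    (cmul (-1, 0) (cmul (p', q') (cmul (cinv (p z, q z)) (cinv (p z, q z))))) z.
Proof.
  intros Hp Hq Hn. unfold cinv. split; cbn [fst snd].
  - eapply dl_val. apply dl_div; [exact Hp| |exact Hn].
    apply dl_plus; apply dl_pow2; eauto.
    unfold cmul, Rsqr; cbn [fst snd]. field. auto.
  - eapply dl_val. apply dl_div; [apply dl_opp; exact Hq| |exact Hn].
    apply dl_plus; apply dl_pow2; eauto.
    unfold cmul, Rsqr; cbn [fst snd]. field. auto.
Qed.

Inductive ex : Type :=
| EC (c : R * R) | ET (n : nat) | EW | EA (a b : ex) | EM (a b : ex).

Fixpoint ev (D : nat -> R -> R) (w : R -> R * R) (e : ex) (z : R) : R * R :=
  match e with
  | EC c => c
  | ET n => (D n z, 0)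
  | EW => w z
  | EA a b => cadd (ev D w a z) (ev D w b z)
  | EM a b => cmul (ev D w a z) (ev D w b z)
  end.

Definition Spp : ex := EA (EC (-5/2, 0)) (EM (EC (0,1)) (ET 2)).

Fixpoint dx (e : ex) : ex :=
  match e with
  | EC _ => EC (0, 0)
  | ET n => ET (S n)
  | EW => EM (EC (-1, 0)) (EM Spp (EM EW EW))
  | EA a b => EA (dx a) (dx b)
  | EM a b => EA (EM (dx a) b) (EM a (dx b))
  end.

Fixpoint bnd (M : nat -> R) (cw : R) (e : ex) : R :=
  match e with
  | EC c => n1 c
  | ET n => M n
  | EW => cw
  | EA a b => bnd M cw a + bnd M cw b
  | EM a b => bnd M cw a * bnd M cw b
  end.

Lemma bnd_ok D w M cw z e : (forall n, Rabs (D n z) <= M n) -> n1 (w z) <= cw ->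
  n1 (ev D w e z) <= bnd M cw e.
Proof.
  intros HM Hw. induction e; simpl.
  - lra.
  - unfold n1; simpl. rewrite Rabs_R0. specialize (HM n). lra.
  - auto.
  - eapply Rle_trans. apply n1_cadd. lra.
  - eapply Rle_trans. apply n1_cmul. apply Rmult_le_compat; auto; apply n1_pos.
Qed.

Lemma ev_ok D w z e : (forall n t, derivable_pt_lim (D n) t (D (S n) t)) ->
  cdiff w (ev D w (dx EW) z) z ->
  cdiff (ev D w e) (ev D w (dx e) z) z.
Proof.
  intros HD Hw. induction e.
  - apply cdiff_const.
  - split; simpl. apply HD. apply dl_const.
  - exact Hw.
  - apply cdiff_add; auto.
  - simpl. apply cdiff_mul; auto.
Qed.

Lemma RInt_lin (f g : R -> R) a b c : ex_RInt f a b -> ex_RInt g a b ->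
  RInt (fun z => c * f z - g z) a b = c * RInt f a b - RInt g a b.
Proof.
  intros Hf Hg. apply is_RInt_unique.
  pose proof (RInt_correct f a b Hf) as H1. pose proof (RInt_correct g a b Hg) as H2.
  apply (is_RInt_minus (fun z => c * f z) g a b (c * RInt f a b) (RInt g a b)); auto.
  apply (is_RInt_scal f a b c (RInt f a b)); auto.
Qed.

Lemma ftc (F f : R -> R) a b : a <= b ->
  (forall z, a <= z <= b -> derivable_pt_lim F z (f z)) ->
  (forall z, a <= z <= b -> continuity_pt f z) ->
  RInt f a b = F b - F a.
Proof.
  intros Hab Hd Hc. apply is_RInt_unique.
  apply (is_RInt_derive F f a b).
  - intros z Hz. rewrite Rmin_left, Rmax_right in Hz by auto.
    apply is_derive_Reals. auto.
  - intros z Hz. rewrite Rmin_left, Rmax_right in Hz by auto.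
    apply continuity_pt_filterlim. auto.
Qed.

Lemma ex_RInt_cont (f : R -> R) a b : a <= b -> (forall z, a <= z <= b -> continuity_pt f z) ->
  ex_RInt f a b.
Proof.
  intros Hab Hc. apply (@ex_RInt_continuous R_CompleteNormedModule). intros z Hz.
  rewrite Rmin_left, Rmax_right in Hz by auto. apply continuity_pt_filterlim. auto.
Qed.

Lemma cdiff_val f l l' z : cdiff f l z -> l = l' -> cdiff f l' z.
Proof. intros H e; subst; auto. Qed.

Section IBP.
Definition rho (yy c z : R) := - ((z - yy)^2 + (2*z - c)^2) / 4.
Definition drho (yy c z : R) := - (z - yy)/2 - (2*z - c).
Definition th (D : nat -> R -> R) (ee xi J z : R) := - ee * z + xi * (2*z - J) + D 0%nat z.
Definition dth (D : nat -> R -> R) (ee xi z : R) := - ee + 2 * xi + D 1%nat z.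
Definition EE h yy c D ee xi J z :=
  (exp (rho yy c z / h) * cos (th D ee xi J z / h), exp (rho yy c z / h) * sin (th D ee xi J z / h)).
Definition ww yy c D ee xi z := cinv (drho yy c z, dth D ee xi z).

Fixpoint amp (k : nat) : ex :=
  match k with
  | O => EC (1, 0)
  | S k => EM (EC (-1, 0)) (dx (EM (amp k) EW))
  end.

Lemma EE_diff h yy c D ee xi J z : 0 < h ->
  (forall n t, derivable_pt_lim (D n) t (D (S n) t)) ->
  cdiff (EE h yy c D ee xi J) (cmul (drho yy c z / h, dth D ee xi z / h) (EE h yy c D ee xi J z)) z.
Proof.
  intros Hh HD. unfold EE, rho, drho, th, dth. split; cbn [fst snd].
  - eapply dl_val. dauto. apply HD. unfold cmul; cbn [fst snd]. field. lra.
  - eapply dl_val. dauto. apply HD. unfold cmul; cbn [fst snd]. field. lra.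
Qed.

Lemma ww_diff yy c D ee xi z :
  (forall n t, derivable_pt_lim (D n) t (D (S n) t)) ->
  drho yy c z ^ 2 + dth D ee xi z ^ 2 <> 0 ->
  cdiff (ww yy c D ee xi) (ev D (ww yy c D ee xi) (dx EW) z) z.
Proof.
  intros HD Hn. unfold ww.
  eapply cdiff_val.
  apply (cdiff_inv (drho yy c) (dth D ee xi) (-5/2) (D 2%nat z)); auto.
  - unfold drho. eapply dl_val. dauto. cbv beta. field.
  - unfold dth. eapply dl_val. dauto. apply HD. cbv beta. ring.
  - simpl. f_equal. f_equal. unfold cadd, cmul; simpl. f_equal; ring.
Qed.
End IBP.

Lemma alg1 X E a w s h : cmul w s = (1, 0) -> h <> 0 ->
  cadd (cmul X E) (cmul (cmul a w) (cmul (fst s / h, snd s / h) E)) =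
  ((1/h) * fst (cmul a E) - fst (cmul (cmul (-1, 0) X) E),
   (1/h) * snd (cmul a E) - snd (cmul (cmul (-1, 0) X) E)).
Proof.
  intros Hws Hh.
  assert (E1 : cmul (cmul a w) (cmul (fst s / h, snd s / h) E) =
               cmul (1/h, 0) (cmul a (cmul (cmul w s) E))).
  { destruct a, w, s, E; unfold cmul; simpl; f_equal; field; auto. }
  rewrite E1, Hws, cmul_1l.
  destruct X, E, a; unfold cmul, cadd; simpl; f_equal; field; auto.
Qed.

Lemma solve_h (h a b d : R) : 0 < h -> 1/h * a - b = d -> a = h * d + h * b.
Proof. intros Hh H. rewrite <- H. field. lra. Qed.

Lemma pow_le1 h N : 0 <= h <= 1 -> h ^ N <= 1.
Proof. intros H. induction N; simpl. lra. nra. Qed.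

Section IBP2.
Variables (h yy c : R) (D : nat -> R -> R) (ee xi J A B : R).
Hypothesis Hh : 0 < h.
Hypothesis HAB : A <= B.
Hypothesis HD : forall n t, derivable_pt_lim (D n) t (D (S n) t).
Hypothesis Hnz : forall z, A <= z <= B -> drho yy c z ^ 2 + dth D ee xi z ^ 2 <> 0.

Let w := ww yy c D ee xi.
Let E := EE h yy c D ee xi J.
Definition Pk (k : nat) (z : R) := cmul (ev D w (amp k) z) (E z).
Definition Gk (k : nat) (z : R) := cmul (ev D w (EM (amp k) EW) z) (E z).

Lemma ev_diff e z : A <= z <= B -> cdiff (ev D w e) (ev D w (dx e) z) z.
Proof.
  intros Hz. apply ev_ok; auto. apply ww_diff; auto.
Qed.

Lemma Pk_cont k z : A <= z <= B ->
  continuity_pt (fun t => fst (Pk k t)) z /\ continuity_pt (fun t => snd (Pk k t)) z.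
Proof.
  intros Hz. eapply cdiff_cont. unfold Pk. apply cdiff_mul. apply ev_diff; auto.
  apply EE_diff; auto.
Qed.

Lemma Gk_diff k z : A <= z <= B ->
  cdiff (Gk k) ((1/h) * fst (Pk k z) - fst (Pk (S k) z), (1/h) * snd (Pk k z) - snd (Pk (S k) z)) z.
Proof.
  intros Hz. unfold Gk. eapply cdiff_val. apply cdiff_mul. apply ev_diff; auto.
  apply EE_diff; auto.
  unfold Pk. simpl ev at 2 4. fold E.
  apply (alg1 _ _ _ _ (drho yy c z, dth D ee xi z) h). unfold w, ww. apply cinv_mul. simpl. apply Hnz; auto. lra.
Qed.

Lemma ibp_step k :
  RInt (fun z => fst (Pk k z)) A B = h * (fst (Gk k B) - fst (Gk k A)) + h * RInt (fun z => fst (Pk (S k) z)) A B /\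
  RInt (fun z => snd (Pk k z)) A B = h * (snd (Gk k B) - snd (Gk k A)) + h * RInt (fun z => snd (Pk (S k) z)) A B.
Proof.
  split.
  - assert (H := ftc (fun z => fst (Gk k z)) (fun z => (1/h) * fst (Pk k z) - fst (Pk (S k) z)) A B HAB).
    rewrite RInt_lin in H.
    + assert (Heq : 1/h * RInt (fun z => fst (Pk k z)) A B - RInt (fun z => fst (Pk (S k) z)) A B =
              fst (Gk k B) - fst (Gk k A)).
      { apply H. intros z Hz. apply (Gk_diff k z Hz).
        intros z Hz. apply cp_minus. apply cp_mult. apply cp_const. apply Pk_cont; auto.
        apply Pk_cont; auto. }
      apply solve_h; auto.
    + apply ex_RInt_cont; auto. intros; apply Pk_cont; auto.
    + apply ex_RInt_cont; auto. intros; apply Pk_cont; auto.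
  - assert (H := ftc (fun z => snd (Gk k z)) (fun z => (1/h) * snd (Pk k z) - snd (Pk (S k) z)) A B HAB).
    rewrite RInt_lin in H.
    + assert (Heq : 1/h * RInt (fun z => snd (Pk k z)) A B - RInt (fun z => snd (Pk (S k) z)) A B =
              snd (Gk k B) - snd (Gk k A)).
      { apply H. intros z Hz. apply (Gk_diff k z Hz).
        intros z Hz. apply cp_minus. apply cp_mult. apply cp_const. apply Pk_cont; auto.
        apply Pk_cont; auto. }
      apply solve_h; auto.
    + apply ex_RInt_cont; auto. intros; apply Pk_cont; auto.
    + apply ex_RInt_cont; auto. intros; apply Pk_cont; auto.
Qed.


Variables (M : nat -> R) (cw a : R).
Hypothesis HM : forall n z, A <= z <= B -> Rabs (D n z) <= M n.
Hypothesis Hw : forall z, A <= z <= B -> n1 (w z) <= cw.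
Hypothesis Hrho : forall z, A <= z <= B -> rho yy c z <= 0.
Hypothesis HrA : rho yy c A <= - a.
Hypothesis HrB : rho yy c B <= - a.
Hypothesis Hh1 : h <= 1.

Lemma n1_EE z : n1 (E z) <= 2 * exp (rho yy c z / h).
Proof.
  unfold E, EE, n1; cbn [fst snd]. rewrite !Rabs_mult, Rabs_pos_eq by (left; apply exp_pos).
  pose proof (exp_pos (rho yy c z / h)).
  pose proof (COS_bound (th D ee xi J z / h)). pose proof (SIN_bound (th D ee xi J z / h)).
  assert (Rabs (cos (th D ee xi J z / h)) <= 1) by (unfold Rabs; destruct Rcase_abs; lra).
  assert (Rabs (sin (th D ee xi J z / h)) <= 1) by (unfold Rabs; destruct Rcase_abs; lra).
  nra.
Qed.

Lemma exp_rho_le z : A <= z <= B -> exp (rho yy c z / h) <= 1.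
Proof.
  intros Hz. rewrite <- exp_0. destruct (Req_dec (rho yy c z) 0) as [e|ne].
  - rewrite e. unfold Rdiv. rewrite Rmult_0_l. lra.
  - left. apply exp_increasing. pose proof (Hrho z Hz).
    unfold Rdiv. assert (0 < / h) by (apply Rinv_0_lt_compat; auto). nra.
Qed.

Lemma exp_end z : rho yy c z <= - a -> exp (rho yy c z / h) <= exp (- a / h).
Proof.
  intros H. destruct H as [H|H].
  - left. apply exp_increasing. unfold Rdiv. apply Rmult_lt_compat_r; auto.
    apply Rinv_0_lt_compat; auto.
  - rewrite H. lra.
Qed.

Definition beta (k : nat) := bnd M cw (amp k).

Lemma beta_nonneg k : (forall n, 0 <= M n) -> 0 <= cw -> 0 <= beta k.
Proof.
  intros H1 H2. unfold beta. generalize (amp k). induction e; simpl; auto.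
  apply n1_pos. lra. apply Rmult_le_pos; auto.
Qed.

Definition Q k := Rabs (RInt (fun z => fst (Pk k z)) A B) + Rabs (RInt (fun z => snd (Pk k z)) A B).

Lemma n1_Pk k z : A <= z <= B -> n1 (Pk k z) <= beta k * (2 * exp (rho yy c z / h)).
Proof.
  intros Hz. unfold Pk. eapply Rle_trans. apply n1_cmul.
  apply Rmult_le_compat. apply n1_pos. apply n1_pos.
  apply bnd_ok. intros; apply HM; auto. apply Hw; auto. apply n1_EE.
Qed.

Lemma Q_direct k : Q k <= 4 * (B - A) * beta k.
Proof.
  unfold Q.
  assert (Hb : forall z, A <= z <= B -> n1 (Pk k z) <= 2 * beta k).
  { intros z Hz. eapply Rle_trans. apply n1_Pk; auto.
    pose proof (exp_rho_le z Hz). pose proof (n1_pos (Pk k z)).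
    assert (0 <= beta k).
    { apply Rle_trans with (n1 (ev D w (amp k) z)). apply n1_pos.
      apply bnd_ok. intros; apply HM; auto. apply Hw; auto. }
    nra. }
  assert (H1 : Rabs (RInt (fun z => fst (Pk k z)) A B) <= (B - A) * (2 * beta k)).
  { apply abs_RInt_le_const; auto. apply ex_RInt_cont; auto. intros; apply Pk_cont; auto.
    intros t Ht. pose proof (Hb t Ht) as Hbt. unfold n1 in Hbt. pose proof (Rabs_pos (snd (Pk k t))). lra. }
  assert (H2 : Rabs (RInt (fun z => snd (Pk k z)) A B) <= (B - A) * (2 * beta k)).
  { apply abs_RInt_le_const; auto. apply ex_RInt_cont; auto. intros; apply Pk_cont; auto.
    intros t Ht. pose proof (Hb t Ht) as Hbt. unfold n1 in Hbt. pose proof (Rabs_pos (fst (Pk k t))). lra. }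
  lra.
Qed.

Lemma n1_Gk k z : A <= z <= B -> n1 (Gk k z) <= beta k * cw * (2 * exp (rho yy c z / h)).
Proof.
  intros Hz. unfold Gk. eapply Rle_trans. apply n1_cmul.
  apply Rmult_le_compat. apply n1_pos. apply n1_pos.
  apply (bnd_ok D w M cw z (EM (amp k) EW)). intros; apply HM; auto. apply Hw; auto. apply n1_EE.
Qed.

Lemma Q_step k : (forall n, 0 <= M n) -> 0 <= cw ->
  Q k <= 4 * h * beta k * cw * exp (- a / h) + h * Q (S k).
Proof.
  intros HM0 Hcw. unfold Q. destruct (ibp_step k) as [E1 E2]. rewrite E1, E2.
  pose proof (n1_Gk k B (conj HAB (Rle_refl B))). pose proof (n1_Gk k A (conj (Rle_refl A) HAB)).
  pose proof (exp_end B HrB). pose proof (exp_end A HrA).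
  pose proof (beta_nonneg k HM0 Hcw).
  assert (Hbc : 0 <= beta k * cw) by (apply Rmult_le_pos; auto).
  assert (HGB : n1 (Gk k B) <= beta k * cw * (2 * exp (- a / h))) by nra.
  assert (HGA : n1 (Gk k A) <= beta k * cw * (2 * exp (- a / h))) by nra.
  unfold n1 in HGB, HGA.
  set (gB1 := fst (Gk k B)) in *. set (gA1 := fst (Gk k A)) in *.
  set (gB2 := snd (Gk k B)) in *. set (gA2 := snd (Gk k A)) in *.
  set (I1 := RInt (fun z => fst (Pk (S k) z)) A B). set (I2 := RInt (fun z => snd (Pk (S k) z)) A B).
  assert (T : forall u v, Rabs (h * u + h * v) <= h * Rabs u + h * Rabs v).
  { intros u v. eapply Rle_trans. apply Rabs_triang. rewrite !Rabs_mult, Rabs_pos_eq by lra. lra. }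
  pose proof (T (gB1 - gA1) I1). pose proof (T (gB2 - gA2) I2).
  pose proof (Rabs_triang gB1 (- gA1)). pose proof (Rabs_triang gB2 (- gA2)).
  rewrite Rabs_Ropp in *. unfold Rminus in *.
  assert (h * Rabs (gB1 + - gA1) <= h * (Rabs gB1 + Rabs gA1)) by (apply Rmult_le_compat_l; lra).
  assert (h * Rabs (gB2 + - gA2) <= h * (Rabs gB2 + Rabs gA2)) by (apply Rmult_le_compat_l; lra).
  nra.
Qed.

Fixpoint SS (N : nat) : R := match N with O => 0 | S n => SS n + 4 * beta n * cw end.

Lemma Q_iter N : (forall n, 0 <= M n) -> 0 <= cw ->
  Q 0 <= SS N * exp (- a / h) + h ^ N * Q N.
Proof.
  intros HM0 Hcw. induction N.
  - simpl. lra.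
  - simpl SS. pose proof (Q_step N HM0 Hcw) as HS.
    assert (Hp : 0 <= h ^ N) by (apply pow_le; lra).
    assert (Hp1 : h ^ N * h <= 1).
    { assert (h ^ N <= 1) by (apply pow_le1; lra). nra. }
    assert (HX : 0 <= 4 * beta N * cw * exp (- a / h)).
    { pose proof (beta_nonneg N HM0 Hcw). pose proof (exp_pos (- a / h)).
      apply Rmult_le_pos; [|lra]. apply Rmult_le_pos; auto. lra. }
    set (X := 4 * beta N * cw * exp (- a / h)) in *.
    assert (h ^ N * Q N <= h ^ N * (h * X) + h ^ N * (h * Q (S N))).
    { replace (4 * h * beta N * cw * exp (- a / h)) with (h * X) in HS by (unfold X; ring).
      rewrite <- Rmult_plus_distr_l. apply Rmult_le_compat_l; auto. }
    replace ((SS N + 4 * beta N * cw) * exp (- a / h)) with (SS N * exp (- a / h) + X) by (unfold X; ring).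
    simpl pow. nra.
Qed.

Lemma ibp_final N : (forall n, 0 <= M n) -> 0 <= cw -> 0 < a ->
  Rabs (RInt (fun z => fst (E z)) A B) + Rabs (RInt (fun z => snd (E z)) A B) <=
  (SS N * (INR N / a) ^ N + 4 * (B - A) * beta N) * h ^ N.
Proof.
  intros HM0 Hcw Ha.
  assert (Ef : forall p : R * R -> R, RInt (fun z => p (E z)) A B = RInt (fun z => p (Pk 0 z)) A B).
  { intros p. apply RInt_ext. intros t _. unfold Pk. simpl ev. rewrite cmul_1l. auto. }
  rewrite (Ef fst), (Ef snd). fold (Q 0).
  pose proof (Q_iter N HM0 Hcw). pose proof (Q_direct N).
  pose proof (exp_small_pow a h N Ha Hh).
  assert (HSS : 0 <= SS N).
  { clear -HM0 Hcw. induction N; simpl. lra. pose proof (beta_nonneg N HM0 Hcw).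
    assert (0 <= beta N * cw) by (apply Rmult_le_pos; auto). lra. }
  replace ((INR N * h / a) ^ N) with ((INR N / a) ^ N * h ^ N) in H1.
  2:{ rewrite <- Rpow_mult_distr. f_equal. field. lra. }
  assert (Hp : 0 <= h ^ N) by (apply pow_le; lra).
  assert (SS N * exp (- a / h) <= SS N * ((INR N / a) ^ N * h ^ N)) by (apply Rmult_le_compat_l; auto).
  assert (h ^ N * Q N <= h ^ N * (4 * (B - A) * beta N)) by (apply Rmult_le_compat_l; auto).
  nra.
Qed.

End IBP2.

Lemma exp_div_le q q' h : 0 < h -> q' <= q -> exp (- q / h) <= exp (- q' / h).
Proof.
  intros Hh H. destruct H as [H|H].
  - left. apply exp_increasing. unfold Rdiv. apply Rmult_lt_compat_r.
    apply Rinv_0_lt_compat; auto. lra.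
  - rewrite H; lra.
Qed.

Lemma gauss_geom q a b h (i L : nat) : 0 < h -> 0 <= b -> exp (- b / h) <= 1/2 ->
  a + b * INR (i - L) <= q -> exp (- q / h) <= exp (- a / h) * (2 ^ L * (1/2) ^ i).
Proof.
  intros Hh Hb Hq Hle.
  eapply Rle_trans. apply exp_div_le with (q' := a + b * INR (i - L)); auto.
  replace (- (a + b * INR (i - L)) / h) with (- a / h + (- b / h) * INR (i - L)) by (field; lra).
  rewrite exp_plus, exp_mul_nat.
  apply Rmult_le_compat_l. left; apply exp_pos.
  apply Rle_trans with ((1/2)^(i - L)).
  - apply pow_incr. split; auto. left; apply exp_pos.
  - destruct (Compare_dec.le_lt_dec L i) as [HL|HL].
    + replace i with (L + (i - L))%nat at 2 by lia. rewrite pow_add.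
      replace (2 ^ L * ((1 / 2) ^ L * (1 / 2) ^ (i - L))) with ((2 * (1/2))^L * (1/2)^(i-L))
        by (rewrite Rpow_mult_distr; ring).
      replace (2 * (1/2)) with 1 by field. rewrite pow1. lra.
    + replace (i - L)%nat with 0%nat by lia. simpl. apply half_pow_mul. lia.
Qed.

Lemma env_eq h x u k : 0 < h -> env h x u k = exp (- ((u - k - x)^2 / 4) / h).
Proof. intros Hh. unfold env. f_equal. field. lra. Qed.

Lemma ineq45 zz a c : 4/5 * (a - c/2)^2 <= (zz - a)^2 + (2*zz - c)^2.
Proof. pose proof (pow2_ge_0 (5*zz - a - 2*c)). nra. Qed.

Lemma cross_bound h x yy z J k beta (L i : nat) : 0 < h -> 0 < beta -> exp (- (beta/10) / h) <= 1/2 ->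
  beta + INR (i - L) / 2 <= Rabs (yy - (J + k + x)/2) ->
  env h yy z 0 * env h x (2*z - J) k <= exp (- (beta^2/5) / h) * (2 ^ L * (1/2) ^ i).
Proof.
  intros Hh Hbeta Hq Hd.
  rewrite !env_eq by auto. rewrite <- exp_plus.
  replace (- ((z - 0 - yy) ^ 2 / 4) / h + - ((2 * z - J - k - x) ^ 2 / 4) / h) with
    (- (((z - yy)^2 + (2*z - (J + k + x))^2)/4) / h) by (field; lra).
  apply gauss_geom with (b := beta/10); auto. lra.
  pose proof (ineq45 z yy (J + k + x)).
  set (d := yy - (J + k + x) / 2) in *.
  assert (Hd2 : d^2 = Rabs d ^ 2) by (rewrite pow2_abs; auto).
  pose proof (pos_INR (i - L)).
  assert (beta * (beta + INR (i - L) / 2) <= d^2) by (rewrite Hd2; nra).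
  lra.
Qed.

Lemma tail_bound h yy z (i : nat) : 0 < h -> exp (- (1/16) / h) <= 1/2 -> (1 <= i)%nat ->
  Rabs (z - yy) <= 3/4 ->
  env h yy z (INR i) <= exp (- (1/64) / h) * (2 * (1/2)^i) /\
  env h yy z (- INR i) <= exp (- (1/64) / h) * (2 * (1/2)^i).
Proof.
  intros Hh Hq Hi Hz.
  assert (Hi1 : INR (i - 1) = INR i - 1) by (rewrite minus_INR by lia; auto).
  assert (HiR : 1 <= INR i) by (replace 1 with (INR 1) by auto; apply le_INR; lia).
  assert (Hgen : forall v, Rabs v <= 3/4 -> 1/64 + 1/16 * INR (i - 1) <= (v - INR i)^2 / 4).
  { intros v Hv. apply Rabs_le_between in Hv. rewrite Hi1. nra. }
  rewrite !env_eq by auto. split.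
  - replace (2 * (1/2)^i) with (2 ^ 1 * (1/2)^i) by ring.
    apply gauss_geom with (b := 1/16); auto. lra.
    replace (z - INR i - yy) with ((z - yy) - INR i) by ring. apply Hgen; auto.
  - replace (2 * (1/2)^i) with (2 ^ 1 * (1/2)^i) by ring.
    apply gauss_geom with (b := 1/16); auto. lra.
    replace ((z - - INR i - yy)^2) with (((-(z - yy)) - INR i)^2) by ring. apply Hgen.
    rewrite Rabs_Ropp; auto.
Qed.

Lemma wconv (g : R -> R) (e K : R) : 0 < e ->
  (forall i:nat, (1 <= i)%nat -> e * (Rabs (g (INR i)) + Rabs (g (- INR i))) <= K * (1/2)^i) ->
  e * Rabs (lim_seq (symsum g) - g 0) <= K.
Proof.
  intros He H.
  assert (H2 : Rabs (lim_seq (symsum g) - g 0) <= K / e).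
  { apply sym_conv0. intros i Hi. specialize (H i Hi).
    apply Rmult_le_reg_l with e; auto.
    replace (e * (K / e * (1/2)^i)) with (K * (1/2)^i) by (field; lra). auto. }
  apply Rmult_le_compat_l with (r := e) in H2; [|lra].
  replace (e * (K / e)) with K in H2 by (field; lra). auto.
Qed.

Definition csub (a b : R * R) : R * R := (fst a - fst b, snd a - snd b).

Lemma n1_wp h x xi u k : n1 (wp_term h x xi u k) <= 2 * env h x u k.
Proof. unfold n1. pose proof (wp_fst_bound h x xi u k). pose proof (wp_snd_bound h x xi u k). lra. Qed.

Lemma Wy_tail h yy ee z : 0 < h -> exp (- (1/16) / h) <= 1/2 -> Rabs (z - yy) <= 3/4 ->
  n1 (csub (wavepacket h yy ee z) (wp_term h yy ee z 0)) <= 8 * exp (- (1/64) / h).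
Proof.
  intros Hh Hq Hz. unfold n1, csub, wavepacket; cbn [fst snd].
  assert (Hf : forall p : R * R -> R, (forall k, Rabs (p (wp_term h yy ee z k)) <= env h yy z k) ->
    Rabs (lim_seq (symsum (fun k => p (wp_term h yy ee z k))) - p (wp_term h yy ee z 0)) <= 4 * exp (- (1/64) / h)).
  { intros p Hp. apply (sym_conv0 (fun k => p (wp_term h yy ee z k))).
    intros i Hi. destruct (tail_bound h yy z i Hh Hq Hi Hz).
    pose proof (Hp (INR i)). pose proof (Hp (- INR i)). lra. }
  pose proof (Hf fst (fun k => wp_fst_bound h yy ee z k)).
  pose proof (Hf snd (fun k => wp_snd_bound h yy ee z k)). lra.
Qed.

Lemma Wx_bound h x xi u : hsmall h -> Rabs (u - x) <= 3 -> n1 (wavepacket h x xi u) <= 34.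
Proof.
  intros Hs Hu. assert (HV : Rabs (u - x) <= INR 3) by (simpl; lra).
  destruct (W_conv_fst h x xi u 3 Hs HV) as [_ H1]. destruct (W_conv_snd h x xi u 3 Hs HV) as [_ H2].
  specialize (H1 0%nat). specialize (H2 0%nat). rewrite symsum_0 in H1, H2.
  pose proof (wp_fst_bound h x xi u 0). pose proof (wp_snd_bound h x xi u 0).
  pose proof (env_le1 h x u 0 (proj1 Hs)).
  unfold n1. cbv beta in H1, H2. rewrite pow_O in H1, H2.
  replace (2 * 2 ^ 3 * 1) with 16 in H1, H2 by ring.
  pose proof (Rabs_triang_inv (fst (wavepacket h x xi u)) (fst (wp_term h x xi u 0))).
  pose proof (Rabs_triang_inv (snd (wavepacket h x xi u)) (snd (wp_term h x xi u 0))).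
  lra.
Qed.

Lemma cross_W h x xi yy z J K : 0 < h ->
  (forall i:nat, (1 <= i)%nat -> env h yy z 0 * (env h x (2*z - J) (INR i) + env h x (2*z - J) (- INR i)) <= K * (1/2)^i) ->
  env h yy z 0 * n1 (csub (wavepacket h x xi (2*z - J)) (wp_term h x xi (2*z - J) 0)) <= 2 * K.
Proof.
  intros Hh H. unfold n1, csub, wavepacket; cbn [fst snd].
  pose proof (env_pos h yy z 0) as He.
  assert (Hf : forall p : R * R -> R, (forall k, Rabs (p (wp_term h x xi (2*z-J) k)) <= env h x (2*z-J) k) ->
    env h yy z 0 * Rabs (lim_seq (symsum (fun k => p (wp_term h x xi (2*z-J) k))) - p (wp_term h x xi (2*z-J) 0)) <= K).
  { intros p Hp. apply (wconv (fun k => p (wp_term h x xi (2*z-J) k))); auto.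
    intros i Hi. specialize (H i Hi).
    pose proof (Hp (INR i)). pose proof (Hp (- INR i)). nra. }
  pose proof (Hf fst (fun k => wp_fst_bound h x xi (2*z-J) k)).
  pose proof (Hf snd (fun k => wp_snd_bound h x xi (2*z-J) k)). lra.
Qed.

Lemma err_decomp X Xt Y Yt e : n1 e <= 2 ->
  n1 (csub (cmul (cconj X) (cmul Y e)) (cmul (cconj Xt) (cmul Yt e))) <=
  2 * (n1 (csub X Xt) * n1 Y) + 2 * (n1 Xt * n1 (csub Y Yt)).
Proof.
  intros He.
  assert (Eq : csub (cmul (cconj X) (cmul Y e)) (cmul (cconj Xt) (cmul Yt e)) =
    cadd (cmul (cconj (csub X Xt)) (cmul Y e)) (cmul (cconj Xt) (cmul (csub Y Yt) e))).
  { destruct X, Xt, Y, Yt, e. unfold csub, cadd, cmul, cconj; simpl. f_equal; ring. }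
  rewrite Eq. eapply Rle_trans. apply n1_cadd.
  assert (G : forall P Q, n1 (cmul (cconj P) (cmul Q e)) <= 2 * (n1 P * n1 Q)).
  { intros P Q. eapply Rle_trans. apply n1_cmul. rewrite n1_cconj.
    pose proof (n1_cmul Q e). pose proof (n1_pos P). pose proof (n1_pos Q). pose proof (n1_pos e).
    assert (n1 (cmul Q e) <= n1 Q * 2) by nra. nra. }
  pose proof (G (csub X Xt) Y). pose proof (G Xt (csub Y Yt)). lra.
Qed.

Lemma Tm_eq h yy ee x xi J (D : nat -> R -> R) z : 0 < h ->
  cmul (cconj (wp_term h yy ee z 0)) (cmul (wp_term h x xi (2*z - J) 0) (cexpi (1/h * D 0%nat z)))
  = EE h yy (J + x) D ee xi J z.
Proof.
  intros Hh. unfold wp_term, EE, cexpi, cconj, cmul; cbn [fst snd].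
  set (a := exp (- (z - 0 - yy) ^ 2 / (4 * h))).
  set (b := exp (- (2 * z - J - 0 - x) ^ 2 / (4 * h))).
  set (al := xi * (2 * z - J - 0) / h). set (be := ee * (z - 0) / h). set (ga := 1 / h * D 0%nat z).
  replace (th D ee xi J z / h) with ((al + ga) - be) by (unfold al, be, ga, th; field; lra).
  replace (exp (rho yy (J + x) z / h)) with (a * b).
  2:{ unfold a, b. rewrite <- exp_plus. f_equal. unfold rho. field. lra. }
  rewrite cos_minus, sin_minus, cos_plus, sin_plus. f_equal; ring.
Qed.

Lemma ex_RInt_any (f : R -> R) a b : (forall z, continuity_pt f z) -> ex_RInt f a b.
Proof.
  intros Hc. destruct (Rle_dec a b) as [H|H].
  - apply ex_RInt_cont; auto.
  - apply ex_RInt_swap. apply ex_RInt_cont; auto. lra.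
Qed.

Lemma RInt_period (f : R -> R) a : (forall z, continuity_pt f z) -> (forall z, f (z + 1) = f z) ->
  RInt f 0 1 = RInt f a (a + 1).
Proof.
  intros Hc Hp.
  assert (H1 := RInt_comp_lin f 1 1 0 a (ex_RInt_any f _ _ Hc)).
  replace (1 * 0 + 1) with 1 in H1 by ring. replace (1 * a + 1) with (a + 1) in H1 by ring.
  assert (H2 : RInt (fun y => scal 1 (f (1 * y + 1))) 0 a = RInt f 0 a).
  { apply RInt_ext. intros t _. change (scal 1 (f (1 * t + 1))) with (1 * f (1 * t + 1)). rewrite Rmult_1_l. replace (1 * t + 1) with (t + 1) by ring. auto. }
  assert (H3 : RInt f 1 (a + 1) = RInt f 0 a).
  { rewrite <- H2. symmetry. exact H1. }
  rewrite <- (RInt_Chasles f a 1 (a+1)) by (apply ex_RInt_any; auto).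
  rewrite <- (RInt_Chasles f 0 a 1) by (apply ex_RInt_any; auto).
  rewrite H3. unfold plus; simpl. change (@AbelianMonoid.plus R_AbelianMonoid) with Rplus. ring.
Qed.

Lemma assembly (F T : R -> R * R) A eps :
  (forall z, continuity_pt (fun t => fst (F t)) z) -> (forall z, continuity_pt (fun t => snd (F t)) z) ->
  (forall z, F (z + 1) = F z) ->
  (forall z, A <= z <= A + 1 -> continuity_pt (fun t => fst (T t)) z /\ continuity_pt (fun t => snd (T t)) z) ->
  (forall z, A <= z <= A + 1 -> n1 (csub (F z) (T z)) <= eps) ->
  Rabs (RInt (fun t => fst (F t)) 0 1) + Rabs (RInt (fun t => snd (F t)) 0 1) <=
  Rabs (RInt (fun t => fst (T t)) A (A + 1)) + Rabs (RInt (fun t => snd (T t)) A (A + 1)) + 2 * eps.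
Proof.
  intros Hc1 Hc2 Hp HT Heps.
  assert (HAB : A <= A + 1) by lra.
  assert (G : forall p : R * R -> R, (forall z, continuity_pt (fun t => p (F t)) z) ->
    (forall z, A <= z <= A + 1 -> continuity_pt (fun t => p (T t)) z) ->
    (forall z, A <= z <= A + 1 -> Rabs (p (F z) - p (T z)) <= eps) ->
    (forall z, p (F (z + 1)) = p (F z)) ->
    Rabs (RInt (fun t => p (F t)) 0 1) <= Rabs (RInt (fun t => p (T t)) A (A + 1)) + eps).
  { intros p Hc HcT Hb Hpp.
    rewrite (RInt_period _ A Hc Hpp).
    assert (E : RInt (fun z => 1 * p (F z) - p (T z)) A (A + 1) =
      1 * RInt (fun t => p (F t)) A (A + 1) - RInt (fun t => p (T t)) A (A + 1)).
    { apply RInt_lin. apply ex_RInt_cont; auto. apply ex_RInt_cont; auto. }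
    assert (Hd : Rabs (RInt (fun z => 1 * p (F z) - p (T z)) A (A + 1)) <= (A + 1 - A) * eps).
    { apply abs_RInt_le_const; auto. apply ex_RInt_cont; auto. intros z Hz.
      apply cp_minus. apply cp_mult. apply cp_const. apply Hc. apply HcT; auto.
      intros t Ht. rewrite Rmult_1_l. apply Hb; auto. }
    rewrite E in Hd. replace (A + 1 - A) with 1 in Hd by ring.
    set (I1 := RInt (fun t => p (F t)) A (A + 1)) in *.
    set (I2 := RInt (fun t => p (T t)) A (A + 1)) in *.
    pose proof (Rabs_triang_inv I1 I2). rewrite Rmult_1_l in Hd. lra. }
  assert (H1 := G fst Hc1 (fun z Hz => proj1 (HT z Hz))).
  assert (H2 := G snd Hc2 (fun z Hz => proj2 (HT z Hz))).
  assert (B1 : forall z, A <= z <= A + 1 -> Rabs (fst (F z) - fst (T z)) <= eps).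
  { intros z Hz. pose proof (Heps z Hz). unfold n1, csub in H; simpl in H.
    pose proof (Rabs_pos (snd (F z) - snd (T z))). lra. }
  assert (B2 : forall z, A <= z <= A + 1 -> Rabs (snd (F z) - snd (T z)) <= eps).
  { intros z Hz. pose proof (Heps z Hz). unfold n1, csub in H; simpl in H.
    pose proof (Rabs_pos (fst (F z) - fst (T z))). lra. }
  specialize (H1 B1 (fun z => f_equal fst (Hp z))). specialize (H2 B2 (fun z => f_equal snd (Hp z))).
  lra.
Qed.

Definition Fint h x xi yy ee tau J z :=
  cmul (cconj (wavepacket h yy ee z)) (cmul (wavepacket h x xi (2 * z - J)) (cexpi (1/h * tau z))).

Lemma reduce h x xi yy ee (tau : R -> R) (j : Z) (T : R -> R * R) A eps :
  hsmall h -> (forall z, continuity_pt tau z) -> (forall z, tau (z + 1) = tau z) ->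
  (forall z, A <= z <= A + 1 -> continuity_pt (fun t => fst (T t)) z /\ continuity_pt (fun t => snd (T t)) z) ->
  (forall z, A <= z <= A + 1 -> n1 (csub (Fint h x xi yy ee tau (IZR j) z) (T z)) <= eps) ->
  cmod (inner (wavepacket h yy ee) (fun z => Fhat tau (1/h) (wavepacket h x xi) z)) <=
  Rabs (RInt (fun t => fst (T t)) A (A + 1)) + Rabs (RInt (fun t => snd (T t)) A (A + 1)) + 2 * eps.
Proof.
  intros Hs Htc Htp HT Heps.
  set (F := Fint h x xi yy ee tau (IZR j)).
  assert (EF : forall z, cmul (cconj (wavepacket h yy ee z)) (Fhat tau (1/h) (wavepacket h x xi) z) = F z).
  { intros z. unfold F, Fint, Fhat. rewrite W_doubling by auto.
    rewrite <- (W_period_Z h x xi (2 * z - IZR j) j Hs). f_equal. f_equal. f_equal. ring. }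
  assert (Hc1 : forall z, continuity_pt (fun t => fst (F t)) z).
  { intros z. unfold F, Fint, cmul, cconj, cexpi; cbn [fst snd].
    pose proof (W_cont_fst h yy ee z Hs). pose proof (W_cont_snd h yy ee z Hs).
    assert (continuity_pt (fun t => fst (wavepacket h x xi (2 * t - IZR j))) z).
    { apply (cp_comp (fun t => 2 * t - IZR j) (fun u => fst (wavepacket h x xi u))).
      cont. apply W_cont_fst; auto. }
    assert (continuity_pt (fun t => snd (wavepacket h x xi (2 * t - IZR j))) z).
    { apply (cp_comp (fun t => 2 * t - IZR j) (fun u => snd (wavepacket h x xi u))).
      cont. apply W_cont_snd; auto. }
    pose proof (Htc z). cont. }
  assert (Hc2 : forall z, continuity_pt (fun t => snd (F t)) z).
  { intros z. unfold F, Fint, cmul, cconj, cexpi; cbn [fst snd].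
    pose proof (W_cont_fst h yy ee z Hs). pose proof (W_cont_snd h yy ee z Hs).
    assert (continuity_pt (fun t => fst (wavepacket h x xi (2 * t - IZR j))) z).
    { apply (cp_comp (fun t => 2 * t - IZR j) (fun u => fst (wavepacket h x xi u))).
      cont. apply W_cont_fst; auto. }
    assert (continuity_pt (fun t => snd (wavepacket h x xi (2 * t - IZR j))) z).
    { apply (cp_comp (fun t => 2 * t - IZR j) (fun u => snd (wavepacket h x xi u))).
      cont. apply W_cont_snd; auto. }
    pose proof (Htc z). cont. }
  assert (Hp : forall z, F (z + 1) = F z).
  { intros z. unfold F, Fint. rewrite W_period1 by auto. rewrite Htp.
    replace (2 * (z + 1) - IZR j) with ((2 * z - IZR j) + INR 2) by (simpl; ring).
    rewrite W_period_nat by auto. auto. }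
  assert (Hr : forall p : R * R -> R,
    (forall z, continuity_pt (fun t => p (F t)) z) ->
    Rint (fun z => p (cmul (cconj (wavepacket h yy ee z)) (Fhat tau (1/h) (wavepacket h x xi) z))) 0 1
    = RInt (fun t => p (F t)) 0 1).
  { intros p Hc. rewrite Rint_eq.
    - apply RInt_ext. intros; rewrite EF; auto.
    - apply (ex_RInt_ext (fun t => p (F t))). intros; rewrite EF; auto. apply ex_RInt_any; auto. }
  eapply Rle_trans. apply cmod_le_n1. unfold inner, n1; cbn [fst snd].
  rewrite (Hr fst Hc1), (Hr snd Hc2).
  apply assembly; auto.
Qed.

Lemma hsmall_of h : 0 < h -> h <= 1/4 -> hsmall h.
Proof.
  intros H1 H2. split; auto. replace (-1 / (4 * h)) with (- (1/4) / h) by (field; lra).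
  apply exp_half; lra.
Qed.

Lemma geo1 w x y yy k gamma (i : nat) : Rabs w < 2 -> 0 < gamma <= 1 -> w = 2 * y - x ->
  gamma <= Rabs (w - k) -> Rabs k = INR i -> Rabs (yy - y) <= gamma / 8 ->
  gamma / 4 + INR (i - 3) / 2 <= Rabs (yy - (0 + k + x) / 2).
Proof.
  intros Hw Hg Hwd Hk Hki Hy.
  replace (yy - (0 + k + x) / 2) with ((yy - y) + (w - k) / 2) by (subst; field).
  assert (Hwk : INR i - 2 <= Rabs (w - k)).
  { rewrite <- Hki. pose proof (Rabs_triang_inv k w). rewrite Rabs_minus_sym in H. lra. }
  assert (T : Rabs (w - k) / 2 - Rabs (yy - y) <= Rabs ((yy - y) + (w - k) / 2)).
  { pose proof (Rabs_triang_inv ((w - k)/2) (-(yy - y))).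
    replace ((w - k) / 2 - - (yy - y)) with ((yy - y) + (w - k) / 2) in H by ring.
    rewrite Rabs_Ropp in H. unfold Rdiv in *. rewrite Rabs_mult, (Rabs_pos_eq (/2)) in H by lra. lra. }
  destruct (Compare_dec.le_lt_dec i 3) as [Hi|Hi].
  - replace (i - 3)%nat with 0%nat by lia. simpl. lra.
  - rewrite minus_INR by lia. simpl INR at 2. lra.
Qed.

Lemma geo2 x y yy J k (i : nat) : 2 * y = J + x -> Rabs k = INR i -> (1 <= i)%nat -> Rabs (yy - y) <= 1/8 ->
  3/8 + INR (i - 1) / 2 <= Rabs (yy - (J + k + x) / 2).
Proof.
  intros Hy Hk Hi Hyy.
  replace (yy - (J + k + x) / 2) with ((yy - y) - k / 2) by lra.
  rewrite minus_INR by lia. simpl INR.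
  pose proof (Rabs_triang_inv (k/2) (yy - y)).
  replace (k / 2 - (yy - y)) with (-((yy - y) - k / 2)) in H by ring.
  rewrite !Rabs_Ropp in H. unfold Rdiv in *. rewrite Rabs_mult, (Rabs_pos_eq (/2)) in H by lra. lra.
Qed.

Lemma Rabs_INR_pm (i : nat) : Rabs (INR i) = INR i /\ Rabs (- INR i) = INR i.
Proof. rewrite Rabs_Ropp. rewrite Rabs_pos_eq by apply pos_INR. auto. Qed.

Lemma case1_err h x xi y yy ee tau gamma z :
  0 < gamma <= 1 -> (forall m : Z, gamma <= Rabs (2 * y - x - IZR m)) -> Rabs (2 * y - x) < 2 ->
  Rabs (yy - y) <= gamma / 8 -> y - 1/2 <= z <= y + 1/2 -> 0 < h -> h <= gamma / 40 ->
  n1 (csub (Fint h x xi yy ee tau (IZR 0) z) (0, 0)) <=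
    544 * exp (- (1/64) / h) + 192 * exp (- ((gamma/4)^2/5) / h).
Proof.
  intros Hg Hm Hw Hyy Hz Hh Hhg.
  assert (Hs : hsmall h) by (apply hsmall_of; lra).
  assert (Hq16 : exp (- (1/16) / h) <= 1/2) by (apply exp_half; lra).
  assert (Hqb : exp (- ((gamma/4)/10) / h) <= 1/2) by (apply exp_half; lra).
  set (e1 := exp (- (1/64) / h)). set (e3 := exp (- ((gamma/4)^2/5) / h)).
  set (X := wavepacket h yy ee z). set (Xt := wp_term h yy ee z 0).
  set (Y := wavepacket h x xi (2 * z - IZR 0)). set (e := cexpi (1/h * tau z)).
  assert (E0 : (0, 0) = cmul (cconj Xt) (cmul (0, 0) e)).
  { unfold cmul, cconj; simpl. f_equal; ring. }
  unfold Fint. fold X Y e. rewrite E0.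
  eapply Rle_trans. apply err_decomp. apply n1_cexpi.
  assert (H1 : n1 (csub X Xt) <= 8 * e1).
  { apply Wy_tail; auto. apply Rabs_le_between. apply Rabs_le_between in Hyy. lra. }
  assert (H2 : n1 Y <= 34).
  { apply Wx_bound; auto. apply Rabs_le_between. apply Rabs_def2 in Hw. lra. }
  assert (H3 : n1 Xt <= 2 * env h yy z 0) by apply n1_wp.
  assert (Hcb : forall (m : Z) (i : nat), Rabs (IZR m) = INR i ->
     env h yy z 0 * env h x (2 * z - IZR 0) (IZR m) <= e3 * (2 ^ 3 * (1/2)^i)).
  { intros m i Hk. apply cross_bound; auto. lra.
    apply (geo1 (2 * y - x) x y); auto. }
  assert (Hcp : forall i : nat, Rabs (IZR (Z.of_nat i)) = INR i /\ Rabs (IZR (- Z.of_nat i)) = INR i).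
  { intros i. rewrite opp_IZR, <- INR_IZR_INZ. apply Rabs_INR_pm. }
  assert (H4 : env h yy z 0 * n1 (csub Y (wp_term h x xi (2 * z - IZR 0) 0)) <= 2 * (16 * e3)).
  { apply cross_W; auto. intros i Hi. destruct (Hcp i) as [Hp1 Hp2].
    pose proof (Hcb _ i Hp1) as B1. pose proof (Hcb _ i Hp2) as B2.
    rewrite <- INR_IZR_INZ in B1. rewrite opp_IZR, <- INR_IZR_INZ in B2.
    replace (2 ^ 3) with 8 in B1, B2 by ring. lra. }
  assert (H5 : env h yy z 0 * n1 (wp_term h x xi (2 * z - IZR 0) 0) <= 16 * e3).
  { pose proof (n1_wp h x xi (2 * z - IZR 0) 0).
    pose proof (Hcb 0%Z 0%nat ltac:(rewrite Rabs_R0; auto)).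
    replace (2 ^ 3 * (1/2) ^ 0) with 8 in H0 by (simpl; ring).
    pose proof (env_pos h yy z 0). nra. }
  assert (H6 : n1 Y <= n1 (csub Y (wp_term h x xi (2 * z - IZR 0) 0)) + n1 (wp_term h x xi (2 * z - IZR 0) 0)).
  { unfold n1, csub; cbn [fst snd].
    pose proof (Rabs_triang (fst Y - fst (wp_term h x xi (2 * z - IZR 0) 0)) (fst (wp_term h x xi (2 * z - IZR 0) 0))).
    pose proof (Rabs_triang (snd Y - snd (wp_term h x xi (2 * z - IZR 0) 0)) (snd (wp_term h x xi (2 * z - IZR 0) 0))).
    replace (fst Y - fst (wp_term h x xi (2 * z - IZR 0) 0) + fst (wp_term h x xi (2 * z - IZR 0) 0)) with (fst Y) in H by ring.
    replace (snd Y - snd (wp_term h x xi (2 * z - IZR 0) 0) + snd (wp_term h x xi (2 * z - IZR 0) 0)) with (snd Y) in H0 by ring.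
    lra. }
  assert (H7 : n1 (csub Y (0, 0)) = n1 Y).
  { unfold n1, csub; cbn [fst snd]. rewrite !Rminus_0_r. auto. }
  rewrite H7.
  pose proof (n1_pos (csub X Xt)). pose proof (n1_pos Y). pose proof (n1_pos Xt).
  pose proof (env_pos h yy z 0).
  assert (n1 Xt * n1 Y <= 2 * (env h yy z 0 * n1 Y)) by nra.
  assert (n1 (csub X Xt) * n1 Y <= 8 * e1 * 34) by nra.
  nra.
Qed.

Lemma case2_err h x xi y yy ee (D : nat -> R -> R) (j : Z) z :
  2 * y = IZR j + x -> Rabs (yy - y) <= 1/8 -> y - 1/2 <= z <= y + 1/2 -> 0 < h -> h <= 3/80 ->
  n1 (csub (Fint h x xi yy ee (D 0%nat) (IZR j) z) (EE h yy (IZR j + x) D ee xi (IZR j) z)) <=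
    544 * exp (- (1/64) / h) + 32 * exp (- ((3/8)^2/5) / h).
Proof.
  intros Hj Hyy Hz Hh Hh2.
  assert (Hs : hsmall h) by (apply hsmall_of; lra).
  assert (Hq16 : exp (- (1/16) / h) <= 1/2) by (apply exp_half; lra).
  assert (Hqb : exp (- ((3/8)/10) / h) <= 1/2) by (apply exp_half; lra).
  set (e1 := exp (- (1/64) / h)). set (e2 := exp (- ((3/8)^2/5) / h)).
  rewrite <- Tm_eq by auto.
  set (X := wavepacket h yy ee z). set (Xt := wp_term h yy ee z 0).
  set (Y := wavepacket h x xi (2 * z - IZR j)). set (Yt := wp_term h x xi (2 * z - IZR j) 0).
  unfold Fint. fold X Y.
  eapply Rle_trans. apply err_decomp. apply n1_cexpi.
  assert (H1 : n1 (csub X Xt) <= 8 * e1).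
  { apply Wy_tail; auto. apply Rabs_le_between. apply Rabs_le_between in Hyy. lra. }
  assert (H2 : n1 Y <= 34).
  { apply Wx_bound; auto. apply Rabs_le_between. lra. }
  assert (H3 : n1 Xt <= 2 * env h yy z 0) by apply n1_wp.
  assert (Hcb : forall k (i : nat), Rabs k = INR i -> (1 <= i)%nat ->
     env h yy z 0 * env h x (2 * z - IZR j) k <= e2 * (2 ^ 1 * (1/2)^i)).
  { intros k i Hk Hi. apply cross_bound; auto. lra.
    apply (geo2 x y); auto. }
  assert (H4 : env h yy z 0 * n1 (csub Y Yt) <= 2 * (4 * e2)).
  { apply cross_W; auto. intros i Hi. destruct (Rabs_INR_pm i) as [Hp1 Hp2].
    pose proof (Hcb _ i Hp1 Hi) as B1. pose proof (Hcb _ i Hp2 Hi) as B2.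
    replace (2 ^ 1) with 2 in B1, B2 by ring. lra. }
  pose proof (n1_pos (csub X Xt)). pose proof (n1_pos Y). pose proof (n1_pos Xt).
  pose proof (n1_pos (csub Y Yt)). pose proof (env_pos h yy z 0).
  assert (n1 Xt * n1 (csub Y Yt) <= 2 * (env h yy z 0 * n1 (csub Y Yt))) by nra.
  assert (n1 (csub X Xt) * n1 Y <= 8 * e1 * 34) by nra.
  nra.
Qed.

Lemma Int_part_eq t (m : Z) : IZR m <= t < IZR m + 1 -> Int_part t = m.
Proof.
  intros H. unfold Int_part. rewrite <- (tech_up t (m + 1)).
  - lia.
  - rewrite plus_IZR. lra.
  - rewrite plus_IZR. lra.
Qed.

Lemma RInt_zero a b : RInt (fun _ => 0) a b = 0.
Proof. rewrite RInt_const. exact (Rmult_0_r (b - a)). Qed.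

Lemma gamma_ex x y : 0 <= x < 1 -> 0 <= y < 1 -> doubling y <> x ->
  exists gamma, 0 < gamma <= 1 /\ (forall m : Z, gamma <= Rabs (2 * y - x - IZR m)) /\ Rabs (2 * y - x) < 2.
Proof.
  intros Hx Hy Hd. set (w := 2 * y - x).
  assert (Hne : forall m : Z, w - IZR m <> 0).
  { intros m Hm. apply Hd. unfold doubling, frac_part.
    rewrite (Int_part_eq (2 * y) m). unfold w in Hm. lra. unfold w in Hm. lra. }
  assert (Hpos : forall m : Z, 0 < Rabs (w - IZR m)) by (intros; apply Rabs_pos_lt; auto).
  set (gamma := Rmin 1 (Rmin (Rabs (w - IZR (-1))) (Rmin (Rabs (w - IZR 0)) (Rmin (Rabs (w - IZR 1)) (Rabs (w - IZR 2)))))).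
  exists gamma. split; [|split].
  - split.
    + unfold gamma. repeat apply Rmin_glb_lt; auto; lra.
    + apply Rmin_l.
  - intros m.
    assert (G1 : gamma <= 1) by apply Rmin_l.
    assert (Gm1 : gamma <= Rabs (w - IZR (-1))) by (unfold gamma; eapply Rle_trans; [apply Rmin_r|apply Rmin_l]).
    assert (G0 : gamma <= Rabs (w - IZR 0)) by (unfold gamma; eapply Rle_trans; [apply Rmin_r|]; eapply Rle_trans; [apply Rmin_r|apply Rmin_l]).
    assert (Gp1 : gamma <= Rabs (w - IZR 1)) by (unfold gamma; eapply Rle_trans; [apply Rmin_r|]; eapply Rle_trans; [apply Rmin_r|]; eapply Rle_trans; [apply Rmin_r|apply Rmin_l]).
    assert (Gp2 : gamma <= Rabs (w - IZR 2)) by (unfold gamma; eapply Rle_trans; [apply Rmin_r|]; eapply Rle_trans; [apply Rmin_r|]; eapply Rle_trans; [apply Rmin_r|apply Rmin_r]).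
    fold w.
    destruct (Z.eq_dec m (-1)) as [->|n1]; auto.
    destruct (Z.eq_dec m 0) as [->|n2]; auto.
    destruct (Z.eq_dec m 1) as [->|n3]; auto.
    destruct (Z.eq_dec m 2) as [->|n4]; auto.
    destruct (Z_le_gt_dec 3 m) as [H3|H3].
    + apply IZR_le in H3. unfold w in *. rewrite Rabs_minus_sym, Rabs_pos_eq; lra.
    + assert (m <= -2)%Z by lia. apply IZR_le in H. unfold w in *. rewrite Rabs_pos_eq; lra.
  - unfold w. apply Rabs_def1; lra.
Qed.

Lemma tau_cont (D : nat -> R -> R) : (forall n t, derivable_pt_lim (D n) t (D (S n) t)) ->
  forall n z, continuity_pt (D n) z.
Proof. intros HD n z. apply derivable_continuous_pt. exists (D (S n) z). apply HD. Qed.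

Lemma case1 (tau : R -> R) (D : nat -> R -> R) x xi y eta :
  D 0%nat = tau -> (forall n t, derivable_pt_lim (D n) t (D (S n) t)) ->
  (forall z, tau (z + 1) = tau z) -> 0 <= x < 1 -> 0 <= y < 1 -> doubling y <> x ->
  microlocally_small (fun hbar z => Fhat tau (1 / hbar) (wavepacket hbar x xi) z) y eta.
Proof.
  intros HD0 HD Hper Hx Hy Hd.
  destruct (gamma_ex x y Hx Hy Hd) as [g [Hg [Hm Hw]]].
  exists (g / 8). split. lra.
  intros N.
  set (a1 := 1/64). set (a3 := (g/4)^2/5).
  assert (Ha3 : 0 < a3) by (unfold a3; pose proof (pow_lt (g/4) 2 ltac:(lra)); lra).
  exists (2 * (544 * (INR N / a1) ^ N + 192 * (INR N / a3) ^ N)), (g / 40).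
  split. lra.
  intros h yy ee [Hh Hhd] Hyy Hee.
  assert (Htc : forall z, continuity_pt tau z) by (intros; rewrite <- HD0; apply tau_cont; auto).
  eapply Rle_trans.
  apply (reduce h x xi yy ee tau 0%Z (fun _ => (0, 0)) (y - 1/2)
           (544 * exp (- a1 / h) + 192 * exp (- a3 / h))).
  - apply hsmall_of; lra.
  - auto.
  - auto.
  - intros; split; apply cp_const.
  - intros z Hz. apply (case1_err h x xi y yy ee tau g z); [exact Hg | exact Hm | exact Hw | lra | lra | lra | lra].
  - cbn [fst snd]. rewrite !RInt_zero, Rabs_R0.
    pose proof (exp_small_pow a1 h N ltac:(unfold a1; lra) Hh).
    pose proof (exp_small_pow a3 h N Ha3 Hh).
    replace ((INR N * h / a1) ^ N) with ((INR N / a1) ^ N * h ^ N) in H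
      by (rewrite <- Rpow_mult_distr; f_equal; unfold a1; field).
    replace ((INR N * h / a3) ^ N) with ((INR N / a3) ^ N * h ^ N) in H0
      by (rewrite <- Rpow_mult_distr; f_equal; field; lra).
    lra.
Qed.

Lemma bound_exists (f : R -> R) A B : A <= B -> (forall z, continuity_pt f z) ->
  exists m, 0 <= m /\ forall z, A <= z <= B -> Rabs (f z) <= m.
Proof.
  intros HAB Hc.
  destruct (continuity_ab_maj (fun z => Rabs (f z)) A B HAB) as [Mx [H1 H2]].
  { intros c _. apply (cp_comp f Rabs c); auto. apply Rcontinuity_abs. }
  exists (Rabs (f Mx)). split. apply Rabs_pos. auto.
Qed.

Lemma case2 (D : nat -> R -> R) x xi y eta :
  (forall n t, derivable_pt_lim (D n) t (D (S n) t)) ->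
  (forall z, D 0%nat (z + 1) = D 0%nat z) -> 0 <= x < 1 -> 0 <= y < 1 -> doubling y = x ->
  eta <> 2 * xi + D 1%nat y ->
  microlocally_small (fun hbar z => Fhat (D 0%nat) (1 / hbar) (wavepacket hbar x xi) z) y eta.
Proof.
  intros HD Hper Hx Hy Hd Heta.
  set (j := Int_part (2 * y)).
  assert (Hj : 2 * y = IZR j + x).
  { unfold doubling, frac_part in Hd. fold j in Hd. lra. }
  set (kap := Rabs (eta - 2 * xi - D 1%nat y)).
  assert (Hk : 0 < kap) by (apply Rabs_pos_lt; lra).
  destruct (tau_cont D HD 1 y (kap / 4) ltac:(lra)) as [alp [Halp Hcont]].
  assert (Hc1 : forall z, Rabs (z - y) < alp -> Rabs (D 1%nat z - D 1%nat y) < kap / 4).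
  { intros z Hz. destruct (Req_dec y z) as [<-|ne].
    - rewrite Rminus_eq_0, Rabs_R0. lra.
    - apply (Hcont z). split. split; [exact I | exact ne]. exact Hz. }
  set (d1 := Rmin (alp / 2) (1/2)).
  assert (Hd1 : 0 < d1) by (unfold d1; apply Rmin_glb_lt; lra).
  assert (Hd1a : d1 <= alp / 2) by apply Rmin_l.
  set (r := Rmin (kap / 4) (Rmin (d1 / 2) (1/8))).
  assert (Hr : 0 < r) by (unfold r; repeat apply Rmin_glb_lt; lra).
  assert (Hr1 : r <= kap / 4) by apply Rmin_l.
  assert (Hr2 : r <= d1 / 2) by (unfold r; eapply Rle_trans; [apply Rmin_r|apply Rmin_l]).
  assert (Hr3 : r <= 1/8) by (unfold r; eapply Rle_trans; [apply Rmin_r|apply Rmin_r]).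
  set (c0 := Rmin (kap / 2) (2 * d1)).
  assert (Hc0 : 0 < c0) by (unfold c0; apply Rmin_glb_lt; lra).
  set (A := y - 1/2).
  assert (Hlow : forall yy ee z, Rabs (yy - y) < r -> Rabs (ee - eta) < r -> A <= z <= A + 1 ->
     c0 <= Rabs (fst (drho yy (IZR j + x) z, dth D ee xi z)) \/ c0 <= Rabs (snd (drho yy (IZR j + x) z, dth D ee xi z))).
  { intros yy ee z Hyy Hee Hz. cbn [fst snd].
    destruct (Rle_lt_dec (Rabs (z - y)) d1) as [Hzy|Hzy].
    - right. unfold c0. eapply Rle_trans. apply Rmin_l.
      assert (Rabs (D 1%nat z - D 1%nat y) < kap / 4) by (apply Hc1; lra).
      unfold dth.
      replace (- ee + 2 * xi + D 1%nat z) with (- (eta - 2 * xi - D 1%nat y) - (ee - eta) + (D 1%nat z - D 1%nat y)) by ring.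
      pose proof (Rabs_triang_inv (- (eta - 2 * xi - D 1%nat y) - (ee - eta)) (- (D 1%nat z - D 1%nat y))).
      pose proof (Rabs_triang_inv (- (eta - 2 * xi - D 1%nat y)) (ee - eta)).
      rewrite !Rabs_Ropp in H0, H1. fold kap in H1.
      replace (- (eta - 2 * xi - D 1%nat y) - (ee - eta) - - (D 1%nat z - D 1%nat y)) with
        (- (eta - 2 * xi - D 1%nat y) - (ee - eta) + (D 1%nat z - D 1%nat y)) in H0 by ring.
      lra.
    - left. unfold c0. eapply Rle_trans. apply Rmin_r.
      unfold drho.
      replace (- (z - yy) / 2 - (2 * z - (IZR j + x))) with (- (5/2) * (z - y) + (yy - y) / 2) by lra.
      pose proof (Rabs_triang_inv (- (5/2) * (z - y)) (- ((yy - y) / 2))).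
      replace (- (5 / 2) * (z - y) - - ((yy - y) / 2)) with (- (5/2) * (z - y) + (yy - y) / 2) in H by ring.
      rewrite Rabs_Ropp, Rabs_mult, Rabs_Ropp, (Rabs_pos_eq (5/2)) in H by lra.
      unfold Rdiv in H. rewrite Rabs_mult, (Rabs_pos_eq (/2)) in H by lra. lra. }
  set (M := fun n => epsilon (inhabits 0) (fun m => 0 <= m /\ forall z, A <= z <= A + 1 -> Rabs (D n z) <= m)).
  assert (HM : forall n, 0 <= M n /\ forall z, A <= z <= A + 1 -> Rabs (D n z) <= M n).
  { intros n. unfold M. apply epsilon_spec. apply bound_exists. lra. apply tau_cont; auto. }
  set (cw := 2 / c0).
  set (a := 9/256).
  exists r. split; auto.
  intros N.
  set (a1 := 1/64). set (a2 := (3/8)^2/5).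
  exists (2 * (544 * (INR N / a1) ^ N + 32 * (INR N / a2) ^ N) +
          (SS M cw N * (INR N / a) ^ N + 4 * (A + 1 - A) * beta M cw N)), (3/80).
  split. lra.
  intros h yy ee [Hh Hhd] Hyy Hee.
  assert (Htc : forall z, continuity_pt (D 0%nat) z) by (intros; apply tau_cont; auto).
  eapply Rle_trans.
  apply (reduce h x xi yy ee (D 0%nat) j (EE h yy (IZR j + x) D ee xi (IZR j)) A
           (544 * exp (- a1 / h) + 32 * exp (- a2 / h))).
  - apply hsmall_of; lra.
  - auto.
  - auto.
  - intros z Hz. apply (cdiff_cont _ _ _ (EE_diff h yy (IZR j + x) D ee xi (IZR j) z Hh HD)).
  - intros z Hz. apply (case2_err h x xi y yy ee D j z); [exact Hj | lra | unfold A in Hz; lra | lra | lra].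
  - assert (HI := ibp_final h yy (IZR j + x) D ee xi (IZR j) A (A + 1) Hh ltac:(lra) HD).
    assert (Hnz : forall z, A <= z <= A + 1 -> drho yy (IZR j + x) z ^ 2 + dth D ee xi z ^ 2 <> 0).
    { intros z Hz. destruct (Hlow yy ee z Hyy Hee Hz) as [L|L]; cbn [fst snd] in L.
      - assert (drho yy (IZR j + x) z ^ 2 = Rabs (drho yy (IZR j + x) z) ^ 2) by (rewrite pow2_abs; auto).
        pose proof (pow2_ge_0 (dth D ee xi z)). nra.
      - assert (dth D ee xi z ^ 2 = Rabs (dth D ee xi z) ^ 2) by (rewrite pow2_abs; auto).
        pose proof (pow2_ge_0 (drho yy (IZR j + x) z)). nra. }
    specialize (HI Hnz M cw a (fun n z Hz => proj2 (HM n) z Hz)).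
    assert (Hw : forall z, A <= z <= A + 1 -> n1 (ww yy (IZR j + x) D ee xi z) <= cw).
    { intros z Hz. unfold ww, cw. apply n1_cinv; auto. }
    specialize (HI Hw).
    assert (Hrho : forall z, A <= z <= A + 1 -> rho yy (IZR j + x) z <= 0).
    { intros z _. unfold rho. pose proof (pow2_ge_0 (z - yy)). pose proof (pow2_ge_0 (2 * z - (IZR j + x))). lra. }
    specialize (HI Hrho).
    assert (HrA : rho yy (IZR j + x) A <= - a).
    { unfold rho, a, A. pose proof (pow2_ge_0 (2 * (y - 1/2) - (IZR j + x))).
      apply Rabs_def2 in Hyy. nra. }
    assert (HrB : rho yy (IZR j + x) (A + 1) <= - a).
    { unfold rho, a, A. pose proof (pow2_ge_0 (2 * (y - 1/2 + 1) - (IZR j + x))).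
      apply Rabs_def2 in Hyy. nra. }
    specialize (HI HrA HrB ltac:(lra) N (fun n => proj1 (HM n))).
    assert (Hcw : 0 <= cw) by (unfold cw; apply Rlt_le, Rdiv_lt_0_compat; lra).
    specialize (HI Hcw ltac:(unfold a; lra)).
    pose proof (exp_small_pow a1 h N ltac:(unfold a1; lra) Hh).
    pose proof (exp_small_pow a2 h N ltac:(unfold a2; lra) Hh).
    replace ((INR N * h / a1) ^ N) with ((INR N / a1) ^ N * h ^ N) in H
      by (rewrite <- Rpow_mult_distr; f_equal; unfold a1; field).
    replace ((INR N * h / a2) ^ N) with ((INR N / a2) ^ N * h ^ N) in H0
      by (rewrite <- Rpow_mult_distr; f_equal; unfold a2; field).
    lra.
Qed.

Theorem mainTheorem2 :
  forall (tau tau' : R -> R),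
    smooth tau ->
    (forall z, tau (z + 1) = tau z) ->
    (forall z, derivable_pt_lim tau z (tau' z)) ->
  forall x xi : R, 0 <= x < 1 ->
  forall y eta : R, 0 <= y < 1 ->
    (doubling y <> x \/ (doubling y = x /\ eta <> 2 * xi + tau' y)) ->
    ~ in_microsupport
        (fun hbar z => Fhat tau (1 / hbar) (wavepacket hbar x xi) z) y eta.
Proof.
  intros tau tau' [D [HD0 HD]] Hper Hder x xi Hx y eta Hy Hcase.
  unfold in_microsupport. intros Hn. apply Hn.
  destruct Hcase as [Hd | [Hd Heta]].
  - apply (case1 tau D); auto.
  - subst tau.
    assert (E : tau' y = D 1%nat y).
    { apply (uniqueness_limite (D 0%nat) y). apply Hder. apply HD. }
    rewrite E in Heta.
    apply case2; auto.
Qed.
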